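(* Let $W$ be an irreducible Coxeter group with generators $s_1,\dots,s_n$ and relations $s_i^2=e$, $(s_is_j)^{m_{ij}}=e$ ($m_{ij}\in\{2,3,\dots\}\cup\{\infty\}$). The following are equivalent: (a) $W$ is finite; (b) there exists an admissible E-GCM graph whose associated Coxeter group is $W$; (c) every E-GCM graph whose associated Coxeter group is $W$ is admissible.
   Context: An E-GCM is a real $n\times n$ matrix $M=(M_{ij})$ with $M_{ii}=2$, $M_{ij}\le 0$ ($i\ne j$), $M_{ij}\ne0\iff M_{ji}\ne0$, and nonzero $M_{ij}M_{ji}$ either $\ge 4$ or $=4\cos^2(\pi/m)$ for an integer $m\ge3$. Its E-GCM graph $(\Gamma,M)$ has nodes $\gamma_i$, adjacent iff $M_{ij}\ne0$. Its associated Coxeter group $W(\Gamma,M)$ has generators $s_i$ and relations $s_i^2=e$, $(s_is_j)^{m_{ij}}=e$ with $m_{ij}=k$ if $M_{ij}M_{ji}=4\cos^2(\pi/k)$ ($k\ge2$ integer) and $m_{ij}=\infty$ if $M_{ij}M_{ji}\ge 4$; ''associated Coxeter group is $W$'' means these $m_{ij}$ coincide with those of $W$ (after identifying nodes with generators). $W$ irreducible means the graph on $\{1,\dots,n\}$ with $i\sim j$ iff $m_{ij}\ge3$ is connected (equivalently $\Gamma$ is connected). Numbers game: positions $\lambda\in\mathbb{R}^n$; firing $\gamma_i$ (allowed iff $\lambda_i>0$) replaces each $\lambda_j$ by $\lambda_j-M_{ij}\lambda_i$; a game repeatedly fires nodes with positive population while any exist; a game sequence is convergent if finite. A connected E-GCM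 graph is admissible if some nonzero position with all $\lambda_i\ge0$ has a convergent game sequence. *)

(* Defs.v *)
From Stdlib Require Import Reals.
From mathcomp Require Import all_boot.
Set Implicit Arguments. Unset Strict Implicit. Unset Printing Implicit Defensive.

(* m i j = Some k  means m_ij = k ;  m i j = None means m_ij = infinity.
   Diagonal entries are irrelevant (the relation s_i^2 = e is built in). *)
Definition coxeter_matrix (n : nat) (m : 'I_n -> 'I_n -> option nat) : Prop :=
  forall i j : 'I_n, i != j ->
    m i j = m j i /\ (forall k, m i j = Some k -> (2 <= k)%N).

(* Since every
   generator is an involution, the quotient monoid of words is the group W. *)
Inductive cox_eq (n : nat) (m : 'I_n -> 'I_n -> option nat) :
  seq 'I_n -> seq 'I_n -> Prop :=
| cox_refl w : cox_eq m w w
| cox_sym w1 w2 : cox_eq m w1 w2 -> cox_eq m w2 w1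
| cox_trans w1 w2 w3 : cox_eq m w1 w2 -> cox_eq m w2 w3 -> cox_eq m w1 w3
| cox_sq u v (i : 'I_n) : cox_eq m (u ++ [:: i; i] ++ v) (u ++ v)
| cox_braid u v (i j : 'I_n) k : i != j -> m i j = Some k ->
    cox_eq m (u ++ flatten (nseq k [:: i; j]) ++ v) (u ++ v).

Definition coxeter_finite (n : nat) (m : 'I_n -> 'I_n -> option nat) : Prop :=
  exists S : seq (seq 'I_n), forall w : seq 'I_n, exists2 w', w' \in S & cox_eq m w w'.

Definition cox_adj (n : nat) (m : 'I_n -> 'I_n -> option nat) : rel 'I_n :=
  fun i j => (i != j) && (match m i j with None => true | Some k => (3 <= k)%N end).

Definition coxeter_irreducible (n : nat) (m : 'I_n -> 'I_n -> option nat) : Prop :=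
  forall i j : 'I_n, connect (cox_adj m) i j.

Open Scope R_scope.

Definition EGCM (n : nat) (M : 'I_n -> 'I_n -> R) : Prop :=
  (forall i, M i i = 2) /\
  (forall i j, i != j -> M i j <= 0) /\
  (forall i j, M i j <> 0 <-> M j i <> 0) /\
  (forall i j, i != j -> M i j * M j i <> 0 ->
     M i j * M j i >= 4 \/
     exists k : nat, (3 <= k)%N /\ M i j * M j i = 4 * (cos (PI / INR k))^2).

Definition egcm_connected (n : nat) (M : 'I_n -> 'I_n -> R) : Prop :=
  forall i j : 'I_n,
    connect (fun a b : 'I_n => (a != b) && (if Req_EM_T (M a b) 0 then false else true)) i j.

Definition assoc_coxeter (n : nat) (M : 'I_n -> 'I_n -> R)
    (m : 'I_n -> 'I_n -> option nat) : Prop :=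
  forall i j : 'I_n, i != j ->
    match m i j with
    | None => M i j * M j i >= 4
    | Some k => M i j * M j i = 4 * (cos (PI / INR k))^2
    end.

Definition fire (n : nat) (M : 'I_n -> 'I_n -> R) (i : 'I_n) (l : 'I_n -> R) : 'I_n -> R :=
  fun j => l j - M i j * l i.

Fixpoint legal_play (n : nat) (M : 'I_n -> 'I_n -> R) (l : 'I_n -> R) (s : seq 'I_n) : Prop :=
  match s with
  | [::] => True
  | i :: s' => 0 < l i /\ legal_play M (fire M i l) s'
  end.

Definition play (n : nat) (M : 'I_n -> 'I_n -> R) (l : 'I_n -> R) (s : seq 'I_n) : 'I_n -> R :=
  foldl (fun l' i => fire M i l') l s.

Definition convergent_game (n : nat) (M : 'I_n -> 'I_n -> R) (l : 'I_n -> R) : Prop :=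
  exists s : seq 'I_n, legal_play M l s /\ forall j, play M l s j <= 0.

Definition admissible (n : nat) (M : 'I_n -> 'I_n -> R) : Prop :=
  egcm_connected M /\
  exists l : 'I_n -> R, (forall i, 0 <= l i) /\ (exists i, l i <> 0) /\ convergent_game M l.

(* Main.v *)
Require Import Defs.
From Stdlib Require Import Reals Lra Lia List Permutation Classical FunctionalExtensionality FinFun.
From mathcomp Require Import all_boot all_algebra zify.
From mathcomp Require Import Rstruct.
Import GRing.Theory Num.Theory.
Set Implicit Arguments. Unset Strict Implicit. Unset Printing Implicit Defensive.
Open Scope R_scope.

Definition Good (n : nat) (M : 'I_n -> 'I_n -> R) (m : 'I_n -> 'I_n -> option nat) :=
  EGCM M /\ coxeter_matrix m /\ assoc_coxeter M m.

Lemma play_cat n (M : 'I_n -> 'I_n -> R) l s1 s2 :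
  play M l (s1 ++ s2) = play M (play M l s1) s2.
Proof. by rewrite /play foldl_cat. Qed.

Lemma play_rcons n (M : 'I_n -> 'I_n -> R) l s i :
  play M l (rcons s i) = fire M i (play M l s).
Proof. by rewrite /play foldl_rcons. Qed.

Lemma play_cons n (M : 'I_n -> 'I_n -> R) l s i :
  play M l (i :: s) = play M (fire M i l) s.
Proof. by []. Qed.

Lemma fire_invol n (M : 'I_n -> 'I_n -> R) (HM : forall i, M i i = 2) i l :
  fire M i (fire M i l) = l.
Proof.
apply: functional_extensionality => j; rewrite /fire HM; ring.
Qed.

Definition nd n (i j : 'I_n) (s : nat) := if odd s then j else i.

Fixpoint altr n (i j : 'I_n) (t : nat) : seq 'I_n :=
  match t with 0%N => [::] | S t' => rcons (altr i j t') (nd i j t') end.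

Fixpoint U2 (a b x y : R) (t : nat) : R * R :=
  match t with
  | 0%N => (- y, x)
  | S t' => let (u0, u1) := U2 a b x y t' in (u1, - u0 + (if odd t' then b else a) * u1)
  end.
Definition U a b x y t := fst (U2 a b x y t).

Lemma U2_snd a b x y t : snd (U2 a b x y t) = U a b x y (S t).
Proof. rewrite /U /=; by case: (U2 a b x y t). Qed.

Lemma U_0 a b x y : U a b x y 0 = - y. Proof. by []. Qed.
Lemma U_1 a b x y : U a b x y 1 = x. Proof. by []. Qed.
Lemma U_SS a b x y t :
  U a b x y (S (S t)) = - U a b x y t + (if odd t then b else a) * U a b x y (S t).
Proof.
rewrite -!U2_snd /U /=. case: (U2 a b x y t) => u0 u1 /=. by [].
Qed.

Lemma U_lin a b x y t : U a b x y t = x * U a b 1 0 t + y * U a b 0 1 t.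
Proof.
have H : forall t, U a b x y t = x * U a b 1 0 t + y * U a b 0 1 t /\
                   U a b x y (S t) = x * U a b 1 0 (S t) + y * U a b 0 1 (S t).
  elim=> [|t' [IH1 IH2]]; first by rewrite !U_0 !U_1; split; ring.
  split => //. rewrite !U_SS IH1 IH2. ring.
by case: (H t).
Qed.

Lemma altr_play_val n (M : 'I_n -> 'I_n -> R) (HM : forall i, M i i = 2) i j (q : 'I_n -> R) t :
  i != j ->
  play M q (altr i j t) (nd i j t) = U (- M i j) (- M j i) (q i) (q j) (S t) /\
  play M q (altr i j t) (nd i j (S t)) = - U (- M i j) (- M j i) (q i) (q j) t.
Proof.
move=> Hij; elim: t => [|t [IH1 IH2]].
  by rewrite /nd /= U_1 U_0; split => //; ring.
have Hne : nd i j t <> nd i j (S t).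
  by rewrite /nd /=; case: (odd t) => /= Hc; move: Hij; rewrite Hc eqxx.
have HSS : nd i j (S (S t)) = nd i j t by rewrite /nd /= negbK.
rewrite /= play_rcons HSS; split.
- rewrite /fire IH2 IH1 U_SS.
  rewrite /nd; case Ho: (odd t) => /=; rewrite ?Ho /=; ring.
- rewrite /fire HM IH1; ring.
Qed.

Fixpoint SO (f : nat -> R) (t : nat) : R :=
  match t with 0%N => 0 | S t' => SO f t' + (if odd t' then 0 else f (S t')) end.
Fixpoint SE (f : nat -> R) (t : nat) : R :=
  match t with 0%N => 0 | S t' => SE f t' + (if odd t' then f (S t') else 0) end.

Lemma altr_play n (M : 'I_n -> 'I_n -> R) (HM : forall i, M i i = 2) i j (q : 'I_n -> R) t z :
  i != j ->
  play M q (altr i j t) z =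
    q z - M i z * SO (U (- M i j) (- M j i) (q i) (q j)) t
        - M j z * SE (U (- M i j) (- M j i) (q i) (q j)) t.
Proof.
move=> Hij; elim: t => [|t IH]; first by rewrite /=; ring.
rewrite /= play_rcons /fire IH.
have [H1 _] := altr_play_val HM q t Hij.
rewrite H1 /nd; case: (odd t) => /=; ring.
Qed.

Fixpoint sumR (f : nat -> R) (k : nat) : R :=
  match k with 0%N => 0 | S k' => sumR f k' + f k' end.

Lemma sumR_ext f g k : (forall s, f s = g s) -> sumR f k = sumR g k.
Proof. move=> H; elim: k => //= k ->; by rewrite H. Qed.

Lemma sumR_lin al be f g k :
  sumR (fun s => al * f s + be * g s) k = al * sumR f k + be * sumR g k.
Proof. elim: k => /= [|k ->]; ring. Qed.

Lemma sin_tele th c K :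
  2 * sin th * sumR (fun s => sin ((2 * INR s + c) * th)) K =
  cos ((c - 1) * th) - cos ((2 * INR K + c - 1) * th).
Proof.
elim: K => [|K IH].
  rewrite /= Rmult_0_r (_ : (2 * 0 + c - 1) * th = (c - 1) * th); [ring|ring].
rewrite [sumR _ _.+1]/= Rmult_plus_distr_l IH S_INR.
replace ((2 * (INR K + 1) + c - 1) * th) with ((2 * INR K + c) * th + th) by ring.
replace ((2 * INR K + c - 1) * th) with ((2 * INR K + c) * th - th) by ring.
rewrite cos_plus cos_minus. ring.
Qed.

Lemma sin_sum0 th c k : INR k * th = PI -> sin th <> 0 ->
  sumR (fun s => sin ((2 * INR s + c) * th)) k = 0.
Proof.
move=> Hk Hs.
have H := sin_tele th c k.
replace ((2 * INR k + c - 1) * th) with ((c - 1) * th + 2 * PI) in H by (rewrite -Hk; ring).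
rewrite cos_plus cos_2PI sin_2PI in H.
have : 2 * sin th * sumR (fun s => sin ((2 * INR s + c) * th)) k = 0 by rewrite H; ring.
move/Rmult_integral => [|//]. move/Rmult_integral => [|]; [lra|done].
Qed.


Lemma sin_rec th A : sin (A + th) = 2 * cos th * sin A - sin (A - th).
Proof. rewrite sin_plus sin_minus; ring. Qed.

Lemma U_closed a b x y th sa sb t :
  0 < sa -> 0 < sb -> a = sa * sa -> b = sb * sb -> sa * sb = 2 * cos th -> sin th <> 0 ->
  U a b x y t = (if odd t then sb else sa) *
     ((x / sb) * sin (INR t * th) + (y / sa) * sin ((INR t - 1) * th)) / sin th.
Proof.
move=> Ha Hb -> -> Hc Hs.
pose f t := (if odd t then sb else sa) *
     ((x / sb) * sin (INR t * th) + (y / sa) * sin ((INR t - 1) * th)) / sin th.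
have Hrec : forall t, f (S (S t)) = - f t + (if odd t then sb * sb else sa * sa) * f (S t).
  move=> t0; rewrite /f !S_INR [odd t0.+2]/= [odd t0.+1]/= negbK.
  have E1 : sin ((INR t0 + 1 + 1) * th) = 2 * cos th * sin ((INR t0 + 1) * th) - sin (INR t0 * th).
    replace ((INR t0 + 1 + 1) * th) with ((INR t0 + 1) * th + th) by ring.
    rewrite sin_rec. by replace ((INR t0 + 1) * th - th) with (INR t0 * th) by ring.
  have E2 : sin ((INR t0 + 1 + 1 - 1) * th) = 2 * cos th * sin ((INR t0 + 1 - 1) * th) - sin ((INR t0 - 1) * th).
    replace ((INR t0 + 1 + 1 - 1) * th) with (((INR t0 + 1 - 1) * th) + th) by ring.
    rewrite sin_rec. by replace ((INR t0 + 1 - 1) * th - th) with ((INR t0 - 1) * th) by ring.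
  rewrite E1 E2 -Hc.
  case: (odd t0) => /=; field; repeat split; try exact Hs; lra.
have H : forall t, U (sa * sa) (sb * sb) x y t = f t /\ U (sa * sa) (sb * sb) x y (S t) = f (S t).
  elim=> [|t0 [IH1 IH2]].
    rewrite /f /= U_0 U_1 Rmult_0_l sin_0 Rmult_1_l.
    replace ((0 - 1) * th) with (- th) by ring. rewrite sin_neg.
    replace ((1 - 1) * th) with 0 by ring. rewrite sin_0.
    split; field; repeat split; try exact Hs; lra.
  split => //. rewrite U_SS Hrec IH1 IH2. by [].
by case: (H t).
Qed.

Lemma INR_leq a b : (a <= b)%N -> INR a <= INR b.
Proof. move/leP; exact: le_INR. Qed.

Lemma INR_double s : INR s.*2 = 2 * INR s.
Proof. elim: s => [|s IH]; first by rewrite /=; ring. rewrite doubleS !S_INR IH; ring. Qed.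

Lemma SO_even f K : SO f K.*2 = sumR (fun s => f s.*2.+1) K.
Proof.
elim: K => [|K IH] //. rewrite doubleS [SO f _]/= [SO f _]/= IH /= odd_double /=. ring.
Qed.

Lemma SE_even f K : SE f K.*2 = sumR (fun s => f s.*2.+2) K.
Proof.
elim: K => [|K IH] //. rewrite doubleS [SE f _]/= [SE f _]/= IH /= odd_double /=. ring.
Qed.

Lemma th_facts k : (3 <= k)%N ->
  let th := PI / INR k in 0 < th /\ INR k * th = PI /\ 0 < sin th /\ 0 < cos th /\ th < PI / 2.
Proof.
move=> Hk th.
have Hk' : 3 <= INR k by have := INR_leq Hk; rewrite /=; lra.
have HP := PI_RGT_0.
have H1 : 0 < th by rewrite /th; apply: Rdiv_lt_0_compat; lra.
have H2 : INR k * th = PI by rewrite /th; field; lra.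
have H3 : th < PI / 2.
  rewrite /th. apply: (Rmult_lt_reg_r (2 * INR k)); first lra.
  field_simplify; try lra. nra.
split => //; split => //; split.
- apply: sin_gt_0 => //; lra.
- split => //; apply: cos_gt_0; lra.
Qed.

Lemma sqrt_facts a b k : (3 <= k)%N -> 0 < a -> 0 < b -> a * b = 4 * (cos (PI / INR k)) ^ 2 ->
  0 < sqrt a /\ 0 < sqrt b /\ a = sqrt a * sqrt a /\ b = sqrt b * sqrt b /\
  sqrt a * sqrt b = 2 * cos (PI / INR k).
Proof.
move=> Hk Ha Hb Hab.
have [_ [_ [_ [Hc _]]]] := th_facts Hk.
split; first exact: sqrt_lt_R0.
split; first exact: sqrt_lt_R0.
split; first by rewrite sqrt_sqrt; lra.
split; first by rewrite sqrt_sqrt; lra.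
rewrite -sqrt_mult; try lra. rewrite Hab.
replace (4 * cos (PI / INR k) ^ 2) with ((2 * cos (PI / INR k)) * (2 * cos (PI / INR k))) by ring.
rewrite sqrt_square; lra.
Qed.

Lemma sums_zero a b x y k : (3 <= k)%N -> 0 < a -> 0 < b -> a * b = 4 * (cos (PI / INR k)) ^ 2 ->
  sumR (fun s => U a b x y s.*2.+1) k = 0 /\ sumR (fun s => U a b x y s.*2.+2) k = 0.
Proof.
move=> Hk Ha Hb Hab.
have [H0 [Hkth [Hs [Hc _]]]] := th_facts Hk.
have [Hsa [Hsb [Ea [Eb Ec]]]] := sqrt_facts Hk Ha Hb Hab.
set th := PI / INR k in H0 Hkth Hs Hc Ec.
set sa := sqrt a in Hsa Ea Ec. set sb := sqrt b in Hsb Eb Ec.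
have Hs' : sin th <> 0 by lra.
split.
- rewrite (sumR_ext _ (g := fun s => (x / sin th) * sin ((2 * INR s + 1) * th) +
                                   (sb * y / (sa * sin th)) * sin ((2 * INR s + 0) * th))).
    rewrite sumR_lin !sin_sum0 //; ring.
  move=> s. rewrite (U_closed x y s.*2.+1 Hsa Hsb Ea Eb Ec Hs') S_INR INR_double oddS odd_double /=.
  replace ((2 * INR s + 1 - 1) * th) with ((2 * INR s + 0) * th) by ring.
  field. split => //; lra.
- rewrite (sumR_ext _ (g := fun s => (sa * x / (sb * sin th)) * sin ((2 * INR s + 2) * th) +
                                   (y / sin th) * sin ((2 * INR s + 1) * th))).
    rewrite sumR_lin !sin_sum0 //; ring.
  move=> s. rewrite (U_closed x y s.*2.+2 Hsa Hsb Ea Eb Ec Hs') !S_INR INR_double !oddS negbK odd_double /=.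
  replace ((2 * INR s + 1 + 1 - 1) * th) with ((2 * INR s + 1) * th) by ring.
  replace ((2 * INR s + 1 + 1) * th) with ((2 * INR s + 2) * th) by ring.
  field. repeat split => //; lra.
Qed.

Lemma U_pos_fin a b k t : (3 <= k)%N -> 0 < a -> 0 < b -> a * b = 4 * (cos (PI / INR k)) ^ 2 ->
  (1 <= t <= k)%N ->
  0 <= U a b 1 0 t /\ 0 <= U a b 0 1 t /\ 0 < U a b 1 0 t + U a b 0 1 t.
Proof.
move=> Hk Ha Hb Hab /andP [Ht1 Htk].
have [H0 [Hkth [Hs [Hc _]]]] := th_facts Hk.
have [Hsa [Hsb [Ea [Eb Ec]]]] := sqrt_facts Hk Ha Hb Hab.
set th := PI / INR k in H0 Hkth Hs Hc Ec.
set sa := sqrt a in Hsa Ea Ec. set sb := sqrt b in Hsb Eb Ec.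
have Hs' : sin th <> 0 by lra.
set w := if odd t then sb else sa.
have Hw : 0 < w by rewrite /w; case: (odd t).
have E1 : U a b 1 0 t = (w / (sb * sin th)) * sin (INR t * th).
  rewrite (U_closed 1 0 t Hsa Hsb Ea Eb Ec Hs') -/w. field; split => //; lra.
have E2 : U a b 0 1 t = (w / (sa * sin th)) * sin ((INR t - 1) * th).
  rewrite (U_closed 0 1 t Hsa Hsb Ea Eb Ec Hs') -/w. field; split => //; lra.
have C1 : 0 < w / (sb * sin th) by apply: Rdiv_lt_0_compat => //; nra.
have C2 : 0 < w / (sa * sin th) by apply: Rdiv_lt_0_compat => //; nra.
have It1 : 1 <= INR t by have := INR_leq Ht1; rewrite /=; lra.
have Itk : INR t <= INR k by apply: INR_leq.
have Hk' : 3 <= INR k by have := INR_leq Hk; rewrite /=; lra.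
have S1 : 0 <= sin (INR t * th).
  apply: sin_ge_0; first nra. rewrite -Hkth. nra.
have S2 : 0 <= sin ((INR t - 1) * th).
  apply: sin_ge_0; first nra. rewrite -Hkth. nra.
rewrite E1 E2. split; first nra. split; first nra.
case: (ltnP t k) => Htk'.
- have : 0 < sin (INR t * th).
    apply: sin_gt_0; first nra.
    have : INR t + 1 <= INR k by rewrite -S_INR; apply: INR_leq.
    move=> ?; rewrite -Hkth; nra.
  nra.
- have Hteq : t = k by apply/eqP; rewrite eqn_leq Htk Htk'.
  have : 0 < sin ((INR t - 1) * th).
    apply: sin_gt_0; last by rewrite -Hkth; nra.
    rewrite Hteq; nra.
  nra.
Qed.

Lemma mono_seq (e : nat -> R) C : 2 <= C -> 0 <= e 1%N -> e 0%N <= e 1%N ->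
  (forall t, e t.+2 = C * e t.+1 - e t) ->
  forall t, e t.+1 - e t >= e 1%N - e 0%N /\ e t.+1 >= e 1%N.
Proof.
move=> HC H1 H0 Hr; elim=> [|t [IH1 IH2]]; first lra.
have P : 0 <= (C - 2) * e t.+1 by apply: Rmult_le_pos; lra.
rewrite Hr; split; lra.
Qed.

Lemma U_pos_inf a b t : 0 < a -> 0 < b -> 4 <= a * b -> (1 <= t)%N ->
  0 < U a b 1 0 t /\ 0 <= U a b 0 1 t.
Proof.
move=> Ha Hb Hab Ht.
set sa := sqrt a. set sb := sqrt b.
have Hsa : 0 < sa by exact: sqrt_lt_R0.
have Hsb : 0 < sb by exact: sqrt_lt_R0.
have Ea : a = sa * sa by rewrite /sa sqrt_sqrt; lra.
have Eb : b = sb * sb by rewrite /sb sqrt_sqrt; lra.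
have HC : 2 <= sa * sb.
  rewrite /sa /sb -sqrt_mult; try lra.
  rewrite -(sqrt_square 2); last lra. apply: sqrt_le_1; lra.
pose w t := if odd t then sb else sa.
have Hw : forall t, 0 < w t by move=> t0; rewrite /w; case: (odd t0).
have Hrec : forall x y t, U a b x y t.+2 / w t.+2 = (sa * sb) * (U a b x y t.+1 / w t.+1) - U a b x y t / w t.
  move=> x y t0. rewrite U_SS /w /= negbK. case: (odd t0) => /=. rewrite {2}Eb. field; lra. rewrite {2}Ea. field; lra.
have M1 := mono_seq (e := fun t => U a b 1 0 t / w t) HC.
have M2 := mono_seq (e := fun t => U a b 0 1 t / w t) HC.
rewrite /= U_0 U_1 in M1 M2.
have E1 : 0 <= 1 / w 1%N by have := Hw 1%N; move=> ?; apply: Rlt_le; apply: Rdiv_lt_0_compat; lra.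
have E2 : 0 <= 0 / w 1%N by rewrite /Rdiv Rmult_0_l; lra.
case: t Ht => // t _.
have W0 := Hw 0%N. have W1 := Hw 1%N.
have F1 : - 0 / w 0%N <= 1 / w 1%N.
  rewrite Ropp_0 /Rdiv Rmult_0_l; apply: Rlt_le; apply: Rdiv_lt_0_compat; lra.
have F2 : - 1 / w 0%N <= 0 / w 1%N.
  rewrite /Rdiv Rmult_0_l. have : 0 < 1 / w 0%N by apply: Rdiv_lt_0_compat; lra.
  rewrite /Rdiv; lra.
have [_ A1] := M1 E1 F1 (fun t => Hrec 1 0 t) t.
have [_ A2] := M2 E2 F2 (fun t => Hrec 0 1 t) t.
have W := Hw t.+1.
have P1 : 0 < 1 / w 1%N by apply: Rdiv_lt_0_compat; [lra | exact: Hw].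
split.
- have : 0 < U a b 1 0 t.+1 / w t.+1 by lra.
  move=> H; have := Rmult_lt_0_compat _ _ H W. by rewrite /Rdiv Rmult_assoc Rinv_l; [lra|lra].
- have : 0 <= U a b 0 1 t.+1 / w t.+1 by rewrite /Rdiv Rmult_0_l in A2; lra.
  move=> H; have := Rmult_le_pos _ _ H (Rlt_le _ _ W). by rewrite /Rdiv Rmult_assoc Rinv_l; [lra|lra].
Qed.

Lemma size_altr n (i j : 'I_n) t : size (altr i j t) = t.
Proof. elim: t => //= t IH; by rewrite size_rcons IH. Qed.

Lemma nth_altr n (i j : 'I_n) t x0 s : (s < t)%N -> nth x0 (altr i j t) s = nd i j s.
Proof.
elim: t s => // t IH s Hs /=. rewrite nth_rcons size_altr.
case: (ltnP s t) => H; first by apply: IH.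
have -> : s = t by lia. by rewrite eqxx.
Qed.

Lemma altr_rev_cat n (i j : 'I_n) k : (0 < k)%N ->
  altr i j k ++ rev (altr j i k) = altr i j k.*2.
Proof.
move=> Hk. apply: (@eq_from_nth _ i).
  by rewrite size_cat size_rev !size_altr -addnn.
move=> s; rewrite size_cat size_rev !size_altr => Hs.
rewrite nth_cat size_altr (nth_altr _ _ (t := k.*2)); last lia.
case: (ltnP s k) => H1; first by rewrite nth_altr.
rewrite nth_rev ?size_altr; last lia.
rewrite nth_altr; last lia.
rewrite /nd.
have Hodd : odd (k - (s - k).+1) = ~~ odd s.
  have E : (k - (s - k).+1 + s)%N = (k.*2).-1 by lia.
  have : odd (k - (s - k).+1 + s) = true.
    rewrite E. case: k Hk {Hs H1 E} => // k _. by rewrite doubleS /= odd_double.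
  rewrite oddD. by case: (odd (k - (s - k).+1)); case: (odd s).
by rewrite Hodd; case: (odd s).
Qed.

Lemma rev_altr2 n (i j : 'I_n) k : rev (altr i j k.*2) = altr j i k.*2.
Proof.
apply: (@eq_from_nth _ i); first by rewrite size_rev !size_altr.
move=> s; rewrite size_rev size_altr => Hs.
rewrite nth_rev ?size_altr // !nth_altr; try lia.
rewrite /nd.
have Hodd : odd (k.*2 - s.+1) = ~~ odd s.
  have E : (k.*2 - s.+1 + s.+1)%N = k.*2 by lia.
  have : odd (k.*2 - s.+1 + s.+1) = false by rewrite E odd_double.
  rewrite oddD /=. by case: (odd (k.*2 - s.+1)); case: (odd s).
by rewrite Hodd; case: (odd s).
Qed.

Lemma flatten_nseq_cat {T : Type} (x : seq T) k :
  flatten (nseq k x) ++ x = x ++ flatten (nseq k x).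
Proof. elim: k => [|k IH] /=; first by rewrite cats0. by rewrite -catA IH. Qed.

Lemma flatten_altr n (i j : 'I_n) k : flatten (nseq k [:: i; j]) = altr i j k.*2.
Proof.
elim: k => // k IH. rewrite doubleS /= -cats1 -cats1 -catA /= -IH.
rewrite /nd /= odd_double /=. by rewrite flatten_nseq_cat.
Qed.

Lemma cox_ctx n (m : 'I_n -> 'I_n -> option nat) a b u v :
  cox_eq m u v -> cox_eq m (a ++ u ++ b) (a ++ v ++ b).
Proof.
elim=> {u v}.
- move=> w; exact: cox_refl.
- move=> w1 w2 _ IH; exact: cox_sym.
- move=> w1 w2 w3 _ IH1 _ IH2; exact: cox_trans IH1 IH2.
- move=> u v i.
  have -> : a ++ (u ++ [:: i; i] ++ v) ++ b = (a ++ u) ++ [:: i; i] ++ (v ++ b) by rewrite !catA.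
  have -> : a ++ (u ++ v) ++ b = (a ++ u) ++ (v ++ b) by rewrite !catA.
  exact: cox_sq.
- move=> u v i j k Hij Hm.
  have -> : a ++ (u ++ flatten (nseq k [:: i; j]) ++ v) ++ b =
            (a ++ u) ++ flatten (nseq k [:: i; j]) ++ (v ++ b) by rewrite !catA.
  have -> : a ++ (u ++ v) ++ b = (a ++ u) ++ (v ++ b) by rewrite !catA.
  exact: cox_braid.
Qed.

Lemma cox_catl n (m : 'I_n -> 'I_n -> option nat) a u v :
  cox_eq m u v -> cox_eq m (a ++ u) (a ++ v).
Proof. move=> H; have := cox_ctx a [::] H; by rewrite !cats0. Qed.

Lemma cox_catr n (m : 'I_n -> 'I_n -> option nat) b u v :
  cox_eq m u v -> cox_eq m (u ++ b) (v ++ b).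
Proof. move=> H; exact: (cox_ctx [::] b H). Qed.

Lemma cox_cons n (m : 'I_n -> 'I_n -> option nat) x u v :
  cox_eq m u v -> cox_eq m (x :: u) (x :: v).
Proof. exact: (cox_catl [:: x]). Qed.

Lemma cox_rcons n (m : 'I_n -> 'I_n -> option nat) x u v :
  cox_eq m u v -> cox_eq m (rcons u x) (rcons v x).
Proof. rewrite -!cats1; exact: cox_catr. Qed.

Lemma cox_sq2 n (m : 'I_n -> 'I_n -> option nat) u i : cox_eq m (u ++ [:: i; i]) u.
Proof. have := cox_sq m u [::] i. by rewrite !cats0. Qed.

Lemma cox_rev_cancel n (m : 'I_n -> 'I_n -> option nat) w : cox_eq m (w ++ rev w) [::].
Proof.
elim: w => [|x w IH] /=; first exact: cox_refl.
rewrite rev_cons -cats1.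
have -> : x :: (w ++ rev w ++ [:: x]) = [:: x] ++ (w ++ rev w) ++ [:: x] by rewrite /= catA.
apply: cox_trans (cox_ctx [:: x] [:: x] IH) _ => /=.
exact: (cox_sq m [::] [::] x).
Qed.

Lemma cox_rev n (m : 'I_n -> 'I_n -> option nat) u v :
  coxeter_matrix m -> cox_eq m u v -> cox_eq m (rev u) (rev v).
Proof.
move=> Hm; elim=> {u v}.
- move=> w; exact: cox_refl.
- move=> w1 w2 _ IH; exact: cox_sym.
- move=> w1 w2 w3 _ IH1 _ IH2; exact: cox_trans IH1 IH2.
- move=> u v i. rewrite !rev_cat -catA. exact: cox_sq.
- move=> u v i j k Hij Hmij. rewrite !rev_cat flatten_altr rev_altr2 -flatten_altr.
  rewrite -catA. apply: cox_braid; first by rewrite eq_sym.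
  have [H _] := Hm i j Hij. by rewrite -H.
Qed.

Lemma cox_alt n (m : 'I_n -> 'I_n -> option nat) (i j : 'I_n) k :
  i != j -> m i j = Some k -> (0 < k)%N -> cox_eq m (altr i j k) (altr j i k).
Proof.
move=> Hij Hmij Hk.
set x := altr i j k. set y := altr j i k.
have H1 : cox_eq m (x ++ rev y) [::].
  rewrite /x /y altr_rev_cat // -flatten_altr.
  have := cox_braid [::] [::] Hij Hmij. by rewrite /= cats0.
have H2 : cox_eq m (rev y ++ y) [::].
  have := cox_rev_cancel m (rev y). by rewrite revK.
have E : x = x ++ [::] by rewrite cats0.
rewrite {1}E.
apply: cox_trans (cox_sym (cox_catl x H2)) _.
rewrite catA.
exact: (cox_catr y H1).
Qed.

Lemma cos_PI_INR2 : cos (PI / INR 2) = 0.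
Proof. replace (INR 2) with 2 by (simpl; ring). exact: cos_PI2. Qed.

Lemma Good_offneg n (M : 'I_n -> 'I_n -> R) m i j k :
  Good M m -> i != j -> m i j = Some k -> (3 <= k)%N -> M i j < 0 /\ M j i < 0.
Proof.
move=> [[Hd [Ho [Hz Hp]]] [Hcm Ha]] Hij Hmij Hk.
have := Ha i j Hij. rewrite Hmij => Hprod.
have [_ [_ [_ [Hc _]]]] := th_facts Hk.
have Hpos : 0 < M i j * M j i by rewrite Hprod; nra.
have H1 := Ho i j Hij. have H2 : M j i <= 0 by apply: Ho; rewrite eq_sym.
have N1 : M i j <> 0 by move=> E; rewrite E in Hpos; lra.
have N2 : M j i <> 0 by move=> E; rewrite E in Hpos; lra.
split; lra.
Qed.

Lemma Good_k2 n (M : 'I_n -> 'I_n -> R) m i j :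
  Good M m -> i != j -> m i j = Some 2%N -> M i j = 0 /\ M j i = 0.
Proof.
move=> [[Hd [Ho [Hz Hp]]] [Hcm Ha]] Hij Hmij.
have := Ha i j Hij. rewrite Hmij cos_PI_INR2 => Hprod.
have H0 : M i j * M j i = 0 by rewrite Hprod; ring.
case: (Rmult_integral _ _ H0) => E.
- split => //. apply: NNPP => H. exact: (proj1 (Hz j i) H E).
- split => //. apply: NNPP => H. exact: (proj1 (Hz i j) H E).
Qed.

Lemma braid_real n (M : 'I_n -> 'I_n -> R) m i j k (q : 'I_n -> R) :
  Good M m -> i != j -> m i j = Some k -> play M q (flatten (nseq k [:: i; j])) = q.
Proof.
move=> HG Hij Hmij.
have HG' := HG. move: HG' => [[Hd [Ho [Hz Hp]]] [Hcm Ha]].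
have [_ Hk2] := Hcm i j Hij. have Hk := Hk2 k Hmij.
apply: functional_extensionality => z.
rewrite flatten_altr altr_play // SO_even SE_even.
case: (ltnP k 3) => Hk3.
- have Ek : k = 2%N by lia. subst k.
  have [E1 E2] := Good_k2 HG Hij Hmij. rewrite E1 E2 /U /=. ring.
- have [N1 N2] := Good_offneg HG Hij Hmij Hk3.
  have := Ha i j Hij. rewrite Hmij => Hprod.
  have [S1 S2] := @sums_zero (- M i j) (- M j i) (q i) (q j) k Hk3 ltac:(lra) ltac:(lra)
    ltac:(rewrite -Hprod; ring).
  rewrite S1 S2; ring.
Qed.

Lemma play_cox n (M : 'I_n -> 'I_n -> R) m u v :
  Good M m -> cox_eq m u v -> forall q, play M q u = play M q v.
Proof.
move=> HG; have HG' := HG; move: HG' => [[Hd _] _].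
elim=> {u v}.
- by [].
- by move=> w1 w2 _ IH q; rewrite IH.
- by move=> w1 w2 w3 _ IH1 _ IH2 q; rewrite IH1 IH2.
- move=> u v i q. rewrite !play_cat /play /=. by rewrite -/(play M _ _) (fire_invol Hd).
- move=> u v i j k Hij Hmij q. rewrite !play_cat. by rewrite (braid_real _ HG Hij Hmij).
Qed.

Definition Val := nat -> R.
Definition lexpos (v : Val) : Prop :=
  exists k, 0 < v k /\ forall k', (k' < k)%N -> v k' = 0.

Lemma classic_min (P : nat -> Prop) : (exists k, P k) -> exists k, P k /\ forall k', (k' < k)%N -> ~ P k'.
Proof.
move=> [k Hk].
have H : forall N, forall k, (k <= N)%N -> P k -> exists k, P k /\ forall k', (k' < k)%N -> ~ P k'.
  elim=> [|N IH] k0 Hk0 HP.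
    exists k0; split => // k' Hk'; lia.
  case: (classic (exists k', (k' < k0)%N /\ P k')) => [[k' [Hk' HP']]|Hno].
    apply: (IH k') => //; lia.
  exists k0; split => // k' Hk' HP'. apply: Hno; by exists k'.
exact: (H k k).
Qed.

Lemma lexpos_add (v w : Val) : lexpos v -> lexpos w -> lexpos (fun k => v k + w k).
Proof.
move=> [kv [Hv Hv0]] [kw [Hw Hw0]].
case: (ltngtP kv kw) => H.
- exists kv; split; first by rewrite (Hw0 kv H); lra.
  move=> k' Hk'; rewrite Hv0 // Hw0; [ring | lia].
- exists kw; split; first by rewrite (Hv0 kw H); lra.
  move=> k' Hk'; rewrite Hw0 // Hv0; [ring | lia].
- subst; exists kw; split; first lra.
  move=> k' Hk'; rewrite Hw0 // Hv0 //; ring.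
Qed.

Lemma lexpos_scale c (v : Val) : 0 < c -> lexpos v -> lexpos (fun k => c * v k).
Proof.
move=> Hc [k [Hk H0]]; exists k; split; first by apply: Rmult_lt_0_compat.
move=> k' Hk'; rewrite H0 //; ring.
Qed.

Lemma lexpos_comb a b (v w : Val) : 0 <= a -> 0 <= b -> 0 < a + b ->
  lexpos v -> lexpos w -> lexpos (fun k => a * v k + b * w k).
Proof.
move=> Ha Hb Hab Hv Hw.
case: (Req_dec a 0) => Ea.
- have Hb' : 0 < b by lra.
  have -> : (fun k => a * v k + b * w k) = (fun k => b * w k)
    by apply: functional_extensionality => k; rewrite Ea; ring.
  exact: lexpos_scale.
case: (Req_dec b 0) => Eb.
- have Ha' : 0 < a by lra.
  have -> : (fun k => a * v k + b * w k) = (fun k => a * v k)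
    by apply: functional_extensionality => k; rewrite Eb; ring.
  exact: lexpos_scale.
apply: lexpos_add; apply: lexpos_scale => //; lra.
Qed.

Lemma lexpos_antisym (v : Val) : lexpos v -> ~ lexpos (fun k => - v k).
Proof.
move=> [k1 [H1 H10]] [k2 [H2 H20]].
case: (ltngtP k1 k2) => H.
- have := H20 k1 H. lra.
- have := H10 k2 H. lra.
- subst; lra.
Qed.

Lemma lexpos_neq0 (v : Val) : lexpos v -> exists k, v k <> 0.
Proof. move=> [k [H _]]; exists k; lra. Qed.

Lemma lex_trich (v : Val) : (forall k, v k = 0) \/ lexpos v \/ lexpos (fun k => - v k).
Proof.
case: (classic (exists k, v k <> 0)) => [Hex|Hno]; last first.
  left => k; apply: NNPP => H; apply: Hno; by exists k.
have [k [Hk Hmin]] := classic_min Hex.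
have H0 : forall k', (k' < k)%N -> v k' = 0 by move=> k' Hk'; apply: NNPP; exact: Hmin.
right; case: (Rlt_or_le 0 (v k)) => H.
- left; by exists k.
- right; exists k; split; first lra. move=> k' Hk'; rewrite H0 //; ring.
Qed.

Definition Pos n := 'I_n -> Val.
Definition vfire n (M : 'I_n -> 'I_n -> R) (i : 'I_n) (p : Pos n) : Pos n :=
  fun j k => p j k - M i j * p i k.
Definition vplay n (M : 'I_n -> 'I_n -> R) (p : Pos n) (s : seq 'I_n) : Pos n :=
  foldl (fun p i => vfire M i p) p s.
Definition slice n (p : Pos n) (k : nat) : 'I_n -> R := fun j => p j k.
Definition vneg n (p : Pos n) : Pos n := fun j k => - p j k.

Fixpoint vlegal n (M : 'I_n -> 'I_n -> R) (Z : {set 'I_n}) (p : Pos n) (s : seq 'I_n) : Prop :=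
  match s with
  | [::] => True
  | i :: s' => i \in Z /\ lexpos (p i) /\ vlegal M Z (vfire M i p) s'
  end.
Definition vterminal n (Z : {set 'I_n}) (p : Pos n) := forall j, j \in Z -> ~ lexpos (p j).
Definition vbounded n (M : 'I_n -> 'I_n -> R) Z (p : Pos n) N :=
  forall s, vlegal M Z p s -> (size s <= N)%N.

Lemma vplay_cat n M (p : Pos n) s1 s2 : vplay M p (s1 ++ s2) = vplay M (vplay M p s1) s2.
Proof. by rewrite /vplay foldl_cat. Qed.
Lemma vplay_rcons n M (p : Pos n) s i : vplay M p (rcons s i) = vfire M i (vplay M p s).
Proof. by rewrite /vplay foldl_rcons. Qed.

Lemma vplay_slice n M (p : Pos n) s j k : vplay M p s j k = play M (slice p k) s j.
Proof.
elim: s p => [|i s IH] p //=.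
Qed.

Lemma vlegal_cat n M Z (p : Pos n) s1 s2 :
  vlegal M Z p (s1 ++ s2) <-> vlegal M Z p s1 /\ vlegal M Z (vplay M p s1) s2.
Proof.
elim: s1 p => [|i s1 IH] p /=; first by tauto.
rewrite IH. tauto.
Qed.

Lemma vlegal_rcons n M Z (p : Pos n) s i :
  vlegal M Z p (rcons s i) <-> vlegal M Z p s /\ i \in Z /\ lexpos (vplay M p s i).
Proof.
rewrite -cats1 vlegal_cat /=. tauto.
Qed.

Lemma vfire_invol n (M : 'I_n -> 'I_n -> R) (Hd : forall i, M i i = 2) i p :
  vfire M i (vfire M i p) = p.
Proof.
apply: functional_extensionality => j; apply: functional_extensionality => k.
rewrite /vfire Hd; ring.
Qed.

Lemma vfire_neg n (M : 'I_n -> 'I_n -> R) i p : vfire M i (vneg p) = vneg (vfire M i p).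
Proof.
apply: functional_extensionality => j; apply: functional_extensionality => k.
rewrite /vfire /vneg; ring.
Qed.

Lemma vplay_neg n (M : 'I_n -> 'I_n -> R) p s : vplay M (vneg p) s = vneg (vplay M p s).
Proof. elim: s p => [|i s IH] p //=. by rewrite vfire_neg IH. Qed.

Lemma vneg_invol n (p : Pos n) : vneg (vneg p) = p.
Proof.
apply: functional_extensionality => j; apply: functional_extensionality => k.
rewrite /vneg; ring.
Qed.

Lemma vplay_cox n (M : 'I_n -> 'I_n -> R) m u v (p : Pos n) :
  Good M m -> cox_eq m u v -> vplay M p u = vplay M p v.
Proof.
move=> HG Huv.
apply: functional_extensionality => j; apply: functional_extensionality => k.
by rewrite !vplay_slice (play_cox HG Huv).
Qed.

Lemma vlegal_rev n (M : 'I_n -> 'I_n -> R) (Hd : forall i, M i i = 2) Z p s :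
  vlegal M Z p s ->
  vlegal M Z (vneg (vplay M p s)) (rev s) /\ vplay M (vneg (vplay M p s)) (rev s) = vneg p.
Proof.
elim: s p => [|i s IH] p //=.
move=> [Hi [Hp Hs]].
have [H1 H2] := IH _ Hs.
rewrite rev_cons vlegal_rcons vplay_rcons H2; split; last by rewrite vfire_neg (vfire_invol Hd).
split => //; split => //.
rewrite /vneg /vfire Hd.
have -> : (fun k => - (p i k - 2 * p i k)) = p i
  by apply: functional_extensionality => k; ring.
by [].
Qed.

Lemma greedy n (M : 'I_n -> 'I_n -> R) Z N (p : Pos n) :
  vbounded M Z p N -> exists t, vlegal M Z p t /\ vterminal Z (vplay M p t).
Proof.
elim: N p => [|N IH] p Hb.
- exists [::]; split => // j Hj Hpj.
  have := Hb [:: j]. rewrite /=. move=> H; have : (1 <= 0)%N by apply: H; split => //; split => //.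
  by [].
- case: (classic (vterminal Z p)) => Ht; first by exists [::].
  have [j [Hj Hpj]] : exists j, j \in Z /\ lexpos (p j).
    apply: NNPP => H; apply: Ht => j Hj Hpj; apply: H; by exists j.
  have Hb' : vbounded M Z (vfire M j p) N.
    move=> s Hs; have := Hb (j :: s). rewrite /=. move=> H; have := H (conj Hj (conj Hpj Hs)). by [].
  have [t [Ht1 Ht2]] := IH _ Hb'.
  by exists (j :: t).
Qed.

Lemma vbounded_play n (M : 'I_n -> 'I_n -> R) Z N (p : Pos n) s :
  vbounded M Z p N -> vlegal M Z p s -> vbounded M Z (vplay M p s) (N - size s).
Proof.
move=> Hb Hs t Ht.
have := Hb (s ++ t). rewrite vlegal_cat size_cat => H. have := H (conj Hs Ht). lia.
Qed.

Lemma altr_cons n (i j : 'I_n) t : altr i j t.+1 = i :: altr j i t.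
Proof.
elim: t => [|t IH] //.
have -> : altr i j t.+2 = rcons (altr i j t.+1) (nd i j t.+1) by [].
rewrite IH /=. have -> : nd i j t.+1 = nd j i t by rewrite /nd /=; case: (odd t).
by [].
Qed.

Lemma vlegal_altr n (M : 'I_n -> 'I_n -> R) (Z : {set 'I_n}) (p : Pos n) i j t :
  i \in Z -> j \in Z ->
  (forall s, (s < t)%N -> lexpos (vplay M p (altr i j s) (nd i j s))) ->
  vlegal M Z p (altr i j t).
Proof.
move=> Hi Hj; elim: t => [|t IH] H //.
rewrite [altr _ _ _.+1]/= vlegal_rcons; split; first by apply: IH => s Hs; apply: H; lia.
split; first by rewrite /nd; case: (odd t).
exact: H.
Qed.

Lemma altr_val_lex n (M : 'I_n -> 'I_n -> R) (Hd : forall i, M i i = 2) (p : Pos n) i j s :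
  i != j ->
  vplay M p (altr i j s) (nd i j s) =
  (fun k => U (- M i j) (- M j i) 1 0 s.+1 * p i k + U (- M i j) (- M j i) 0 1 s.+1 * p j k).
Proof.
move=> Hij; apply: functional_extensionality => k.
rewrite vplay_slice. have [H _] := altr_play_val Hd (slice p k) s Hij.
rewrite H U_lin /slice; ring.
Qed.

Lemma rank2 n (M : 'I_n -> 'I_n -> R) m (Z : {set 'I_n}) (p : Pos n) i j :
  Good M m -> i != j -> i \in Z -> j \in Z -> lexpos (p i) -> lexpos (p j) ->
  match m i j with
  | None => forall t, vlegal M Z p (altr i j t)
  | Some k => vlegal M Z p (altr i j k)
  end.
Proof.
move=> HG Hij Hi Hj Hpi Hpj.
have HG' := HG. move: HG' => [[Hd [Ho [Hz Hp]]] [Hcm Ha]].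
have Hmi := Ha i j Hij.
have Hcomb : forall s, 0 <= U (- M i j) (- M j i) 1 0 s.+1 -> 0 <= U (- M i j) (- M j i) 0 1 s.+1 ->
     0 < U (- M i j) (- M j i) 1 0 s.+1 + U (- M i j) (- M j i) 0 1 s.+1 ->
     lexpos (vplay M p (altr i j s) (nd i j s)).
  move=> s H1 H2 H3. rewrite altr_val_lex //. apply: lexpos_comb => //.
case Em : (m i j) => [k|]; rewrite Em in Hmi.
- apply: vlegal_altr => // s Hs.
  have [_ Hk2] := Hcm i j Hij. have Hk := Hk2 k Em.
  case: (ltnP k 3) => Hk3.
  + have Ek : k = 2%N by lia. subst k.
    have [E1 E2] := Good_k2 HG Hij Em. rewrite E1 E2 in Hcomb.
    apply: Hcomb; case: s Hs => [|[|s]] Hs //; rewrite /U /=; lra.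
  + have [N1 N2] := Good_offneg HG Hij Em Hk3.
    have [A1 [A2 A3]] := @U_pos_fin (- M i j) (- M j i) k s.+1 Hk3 ltac:(lra) ltac:(lra)
      ltac:(rewrite -Hmi; ring) ltac:(apply/andP; split; lia).
    exact: Hcomb.
- move=> t; apply: vlegal_altr => // s Hs.
  have H1 := Ho i j Hij. have H2 : M j i <= 0 by apply: Ho; rewrite eq_sym.
  have N1 : M i j <> 0 by move=> E; rewrite E in Hmi; lra.
  have N2 : M j i <> 0 by move=> E; rewrite E in Hmi; lra.
  have [A1 A2] := @U_pos_inf (- M i j) (- M j i) s.+1 ltac:(lra) ltac:(lra) ltac:(nra) ltac:(lia).
  apply: Hcomb; lra.
Qed.

Theorem SC n (M : 'I_n -> 'I_n -> R) m (Z : {set 'I_n}) (HG : Good M m) :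
  forall N (p : Pos n) u, vlegal M Z p u -> vterminal Z (vplay M p u) -> size u = N ->
  forall v, vlegal M Z p v ->
    (size v <= N)%N /\ (vterminal Z (vplay M p v) -> size v = N /\ cox_eq m u v).
Proof.
have HG' := HG. move: HG' => [[Hd [Ho [Hz Hp]]] [Hcm Ha]].
elim=> [|N IH] p u Hu Ht Hs v Hv.
- case: u Hu Ht Hs => // _ Ht _.
  case: v Hv => [|j v] /=; first by split => // _; split => //; exact: cox_refl.
  move=> [Hj [Hpj _]]. by case: (Ht j Hj Hpj).
- case: u Hu Ht Hs => // i u' [Hi [Hpi Hu']] Ht /= [Hs].
  have IHi := IH _ _ Hu' Ht Hs.
  case: v Hv => [|j v'] /=.
    move=> _; split => // Hter. by case: (Hter i Hi Hpi).
  move=> [Hj [Hpj Hv']].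
  case: (eqVneq i j) => [Eij|Hij].
    subst j. have [A1 A2] := IHi _ Hv'. split => // Hter.
    have [B1 B2] := A2 Hter. split; first by rewrite B1. exact: cox_cons.
  have R2 := rank2 HG Hij Hi Hj Hpi Hpj.
  case Em : (m i j) => [k|]; rewrite Em in R2; last first.
    have := R2 N.+2. rewrite altr_cons => [[_ [_ HT]]].
    have [A1 _] := IHi _ HT. move: A1; rewrite size_altr. lia.
  have [_ Hk2] := Hcm i j Hij. have Hk := Hk2 k Em.
  have Hmji : m j i = Some k by have [E _] := Hcm i j Hij; rewrite -E.
  have Hji : j != i by rewrite eq_sym.
  have R2' := rank2 HG Hji Hj Hi Hpj Hpi.
  rewrite Hmji in R2'.
  have Hcx : cox_eq m (altr i j k) (altr j i k) by apply: cox_alt => //; lia.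
  have Hpl := vplay_cox p HG Hcx.
  move: R2 R2' Hpl Hcx. case: k Hk Em Hmji => // k _ Em Hmji.
  rewrite !altr_cons /= => [[_ [_ Ti]]] [_ [_ Tj]] Hpl Hcx.
  have [A1 _] := IHi _ Ti. rewrite size_altr in A1.
  set r := vplay M (vfire M i p) (altr j i k).
  have Hb : vbounded M Z r (N - k).
    have := vbounded_play (N := N) (p := vfire M i p) (fun s Hs => proj1 (IHi s Hs)) Ti.
    by rewrite size_altr.
  have [t [Htl Htt]] := greedy Hb.
  have L1 : vlegal M Z (vfire M i p) (altr j i k ++ t) by apply/vlegal_cat.
  have T1 : vterminal Z (vplay M (vfire M i p) (altr j i k ++ t)) by rewrite vplay_cat.
  have [_ B] := IHi _ L1. have [S1 C1] := B T1.
  have Er : vplay M (vfire M j p) (altr i j k) = r by rewrite /r; exact: (esym Hpl).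
  have L2 : vlegal M Z (vfire M j p) (altr i j k ++ t) by apply/vlegal_cat; rewrite Er.
  have T2 : vterminal Z (vplay M (vfire M j p) (altr i j k ++ t)) by rewrite vplay_cat Er.
  have S2 : size (altr i j k ++ t) = N by move: S1; rewrite !size_cat !size_altr.
  have IHj := IH _ _ L2 T2 S2 _ Hv'.
  have [D1 D2] := IHj. split => // Hter.
  have [E1 E2] := D2 Hter. split; first by rewrite E1.
  apply: cox_trans (cox_cons i C1) _.
  have X1 : cox_eq m (i :: (altr j i k ++ t)) (j :: (altr i j k ++ t)).
    exact: (cox_catr t Hcx).
  apply: cox_trans X1 _. exact: cox_cons.
Qed.

Definition sumI n (P : pred 'I_n) (f : 'I_n -> R) : R := (\sum_(k < n | P k) f k)%R.

Lemma sumI_ext n P (f g : 'I_n -> R) : (forall k, f k = g k) -> sumI P f = sumI P g.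
Proof. move=> H; apply: eq_bigr => k _; exact: H. Qed.

Lemma sumI_add n P (f g : 'I_n -> R) : sumI P (fun k => f k + g k) = sumI P f + sumI P g.
Proof. exact: big_split. Qed.

Lemma sumI_scal n P c (f : 'I_n -> R) : sumI P (fun k => c * f k) = c * sumI P f.
Proof. rewrite /sumI RmultE mulr_sumr. by []. Qed.

Lemma sumI_sub n P (f g : 'I_n -> R) : sumI P (fun k => f k - g k) = sumI P f - sumI P g.
Proof.
rewrite (sumI_ext _ (g := fun k => f k + (-1) * g k)); last by move=> k; ring.
rewrite sumI_add sumI_scal; ring.
Qed.

Lemma sumI_zero n P : sumI P (fun _ : 'I_n => 0) = 0.
Proof. by rewrite /sumI big1. Qed.

Lemma sumI_delta n (f : 'I_n -> R) i :
  sumI predT (fun k => f k * (if k == i then 1 else 0)) = f i.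
Proof.
rewrite /sumI (bigD1 i) //= eqxx big1 /=; first by rewrite RmultE mulr1 addr0.
move=> k Hk. by rewrite (negbTE Hk) RmultE mulr0.
Qed.

Lemma SC_bound n (M : 'I_n -> 'I_n -> R) m (Z : {set 'I_n}) p u :
  Good M m -> vlegal M Z p u -> vterminal Z (vplay M p u) -> vbounded M Z p (size u).
Proof. move=> HG Hu Ht v Hv. by have [] := SC HG Hu Ht (erefl _) Hv. Qed.

Lemma SC_cox n (M : 'I_n -> 'I_n -> R) m (Z : {set 'I_n}) p u v :
  Good M m -> vlegal M Z p u -> vterminal Z (vplay M p u) ->
  vlegal M Z p v -> vterminal Z (vplay M p v) -> cox_eq m u v.
Proof. move=> HG Hu Ht Hv Hvt. have [_ H] := SC HG Hu Ht (erefl _) Hv. by have [] := H Hvt. Qed.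

Lemma exchange n (M : 'I_n -> 'I_n -> R) m (Z : {set 'I_n}) (rho : Pos n) u i :
  Good M m -> (forall j, j \in Z -> lexpos (rho j)) -> vlegal M Z rho u -> i \in Z ->
  lexpos (vneg (vplay M rho u) i) ->
  exists v, vlegal M Z rho v /\ cox_eq m (rcons u i) v.
Proof.
move=> HG Hrho Hu Hi Hneg.
have HG' := HG; move: HG' => [[Hd _] [Hcm _]].
set p := vplay M rho u in Hneg *.
have [L1 E1] := vlegal_rev Hd Hu. rewrite -/p in L1 E1.
have T1 : vterminal Z (vplay M (vneg p) (rev u)).
  rewrite E1 => j Hj. exact: lexpos_antisym (Hrho j Hj).
have Hb := SC_bound HG L1 T1.
have Hb' := vbounded_play Hb (s := [:: i]) (conj Hi (conj Hneg I)).
have [v0 [Lv0 Tv0]] := greedy Hb'.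
have L2 : vlegal M Z (vneg p) (i :: v0) by split => //; split.
have T2 : vterminal Z (vplay M (vneg p) (i :: v0)) by [].
have C := SC_cox HG L1 T1 L2 T2.
have Eend : vplay M (vneg p) (i :: v0) = vneg rho by rewrite -(vplay_cox _ HG C) E1.
have [L3 _] := vlegal_rev Hd Lv0.
have Eq : vneg (vplay M (vfire M i (vneg p)) v0) = rho.
  have : vplay M (vfire M i (vneg p)) v0 = vneg rho by exact: Eend.
  move=> ->; exact: vneg_invol.
rewrite Eq in L3.
exists (rev v0); split => //.
have C' := cox_rev Hcm C. rewrite revK rev_cons in C'.
apply: cox_trans (cox_rcons i C') _.
rewrite -!cats1 -catA /=. exact: cox_sq2.
Qed.

Lemma play_coef n (M : 'I_n -> 'I_n -> R) s :
  exists C : 'I_n -> 'I_n -> R, forall q j, play M q s j = sumI predT (fun k => C j k * q k).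
Proof.
elim/last_ind: s => [|s a [C HC]].
- exists (fun j k => if k == j then 1 else 0) => q j.
  rewrite (sumI_ext _ (g := fun k => q k * (if k == j then 1 else 0))); last by move=> k; ring.
  by rewrite sumI_delta.
- exists (fun j k => C j k - M a j * C a k) => q j.
  rewrite play_rcons /fire !HC -sumI_scal.
  rewrite -sumI_sub; apply: sumI_ext => k; ring.
Qed.

Lemma play_rev_inv n (M : 'I_n -> 'I_n -> R) (Hd : forall i, M i i = 2) q s :
  play M (play M q (rev s)) s = q.
Proof.
elim: s q => [|a s IH] q //=.
rewrite rev_cons play_rcons (fire_invol Hd). exact: IH.
Qed.

Lemma play_nonzero n (M : 'I_n -> 'I_n -> R) (Hd : forall i, M i i = 2) s i :
  ~ (forall k : 'I_n, play M (fun j => if j == k then 1 else 0) s i = 0).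
Proof.
move=> H.
have [C HC] := play_coef M s.
have HCi : forall k, C i k = 0.
  move=> k. have := H k. rewrite HC.
  by rewrite sumI_delta.
set q := play M (fun j => if j == i then 1 else 0) (rev s).
have := play_rev_inv Hd (fun j => if j == i then 1 else 0) s.
move/(f_equal (fun f => f i)). rewrite eqxx HC.
rewrite (sumI_ext _ (g := fun _ => 0)); first by rewrite sumI_zero; lra.
move=> k; rewrite HCi; ring.
Qed.

Definition idtail n (rho : Pos n) := forall (j k : 'I_n), rho j (k.+1) = if j == k then 1 else 0.

Lemma idtail_nonzero n (M : 'I_n -> 'I_n -> R) (Hd : forall i, M i i = 2) (rho : Pos n) s i :
  idtail rho -> ~ (forall k, vplay M rho s i k = 0).
Proof.
move=> Hid H. apply: (play_nonzero Hd (s := s) (i := i)) => k.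
have := H k.+1. rewrite vplay_slice.
have -> : slice rho k.+1 = (fun j => if j == k then 1 else 0).
  apply: functional_extensionality => j; exact: Hid.
by [].
Qed.

Lemma all_words_legal n (M : 'I_n -> 'I_n -> R) m (Z : {set 'I_n}) (rho : Pos n) :
  Good M m -> (forall j, j \in Z -> lexpos (rho j)) -> idtail rho ->
  forall w, all (fun x => x \in Z) w -> exists v, vlegal M Z rho v /\ cox_eq m w v.
Proof.
move=> HG Hrho Hid.
have HG' := HG; move: HG' => [[Hd _] _].
elim/last_ind => [|w i IH]; first by move=> _; exists [::]; split => //; exact: cox_refl.
rewrite all_rcons => /andP [Hi Hw].
have [v [Lv Cv]] := IH Hw.
have Cw : cox_eq m (rcons w i) (rcons v i) by exact: cox_rcons.
case: (lex_trich (vplay M rho v i)) => [Hz|[Hpos|Hneg]].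
- by case: (idtail_nonzero (s := v) (i := i) Hd Hid Hz).
- exists (rcons v i); split => //. by apply/vlegal_rcons.
- have [v' [Lv' Cv']] := exchange HG Hrho Lv Hi Hneg.
  exists v'; split => //. exact: cox_trans Cw Cv'.
Qed.

Fixpoint words n (N : nat) : seq (seq 'I_n) :=
  match N with
  | 0%N => [:: [::]]
  | S N' => [::] :: [seq i :: w | i <- enum 'I_n, w <- words n N']
  end.

Lemma words_mem n N (w : seq 'I_n) : (size w <= N)%N -> w \in words n N.
Proof.
elim: N w => [|N IH] [|i w] //= Hs.
rewrite inE; apply/orP; right.
apply: (allpairs_f (fun i w => i :: w)); first by rewrite mem_enum.
exact: IH.
Qed.

Definition FinZ n m (Z : {set 'I_n}) :=
  exists S : seq (seq 'I_n), all (fun w => all (fun x => x \in Z) w) S /\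
    forall w, all (fun x => x \in Z) w -> exists2 w', w' \in S & cox_eq m w w'.

Lemma fin_from_bound n (M : 'I_n -> 'I_n -> R) m (Z : {set 'I_n}) (rho : Pos n) N :
  Good M m -> (forall j, j \in Z -> lexpos (rho j)) -> idtail rho -> vbounded M Z rho N ->
  FinZ m Z.
Proof.
move=> HG Hrho Hid Hb.
exists [seq w <- words n N | all (fun x => x \in Z) w]; split.
  by apply/allP => w; rewrite mem_filter => /andP [].
move=> w Hw.
have [v [Lv Cv]] := all_words_legal HG Hrho Hid Hw.
exists v => //. rewrite mem_filter; apply/andP; split.
- elim: v rho Lv {Hrho Hid Hb Cv} => [|a v IH] rho //= [Ha [_ Lv]].
  by rewrite Ha (IH _ Lv).
- apply: words_mem. exact: Hb.
Qed.

Definition lsum {A : Type} (f : A -> R) (l : list A) : R := fold_right (fun a acc => f a + acc) 0 l.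

Lemma lsum_perm {A : Type} (f : A -> R) l l' : Permutation l l' -> lsum f l = lsum f l'.
Proof.
elim=> {l l'} //=.
- by move=> x l l' _ ->.
- by move=> x y l; ring.
- by move=> l l' l'' _ -> _ ->.
Qed.

Lemma lsum_map {A B : Type} (f : B -> R) (g : A -> B) l : lsum f (List.map g l) = lsum (fun a => f (g a)) l.
Proof. elim: l => //= a l ->. by []. Qed.

Lemma lsum_ext {A : Type} (f g : A -> R) l : (forall a, In a l -> f a = g a) -> lsum f l = lsum g l.
Proof.
elim: l => //= a l IH H. rewrite H; last by left. rewrite IH // => b Hb; apply: H; by right.
Qed.

Lemma lsum_opp {A : Type} (f : A -> R) l : lsum (fun a => - f a) l = - lsum f l.
Proof. elim: l => /= [|a l ->]; ring. Qed.

Lemma sumI_extP n (P : pred 'I_n) (f g : 'I_n -> R) : (forall k, P k -> f k = g k) -> sumI P f = sumI P g.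
Proof. move=> H; apply: eq_bigr => k Hk; exact: H. Qed.

Lemma lsum_sumI {A : Type} n (P : pred 'I_n) (g : A -> 'I_n -> R) (d : 'I_n -> R) l :
  lsum (fun a => sumI P (fun j => g a j * d j)) l = sumI P (fun j => lsum (fun a => g a j) l * d j).
Proof.
elim: l => /= [|a l ->].
- rewrite (sumI_ext _ (g := fun _ => 0)) ?sumI_zero // => j; ring.
- rewrite -sumI_add; apply: sumI_ext => j; ring.
Qed.

Lemma lsum_const1 {A : Type} (f : A -> R) l : (forall a, In a l -> f a = 1) -> lsum f l = INR (length l).
Proof.
elim: l => [|a l IH] H; first by [].
change (lsum f (a :: l)) with (f a + lsum f l). change (length (a :: l)) with (S (length l)).
rewrite H; last by left. rewrite IH; last by move=> b Hb; apply: H; right.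
rewrite S_INR; ring.
Qed.

Lemma dedup_list {A : Type} (l : list A) : exists l', NoDup l' /\ forall x, In x l <-> In x l'.
Proof.
elim: l => [|a l [l' [H1 H2]]]; first by exists nil; split => //; constructor.
case: (classic (In a l')) => Ha.
- exists l'; split => // x /=; split.
  + case=> [<-|]//. by move/H2.
  + move/H2; by right.
- exists (a :: l'); split; first by constructor.
  move=> x /=. rewrite H2. tauto.
Qed.

Lemma In_mem {T : eqType} (x : T) (s : seq T) : In x s -> x \in s.
Proof. elim: s => //= a s IH [->|H]; rewrite inE; first by rewrite eqxx. by rewrite IH ?orbT. Qed.

Lemma mem_In {T : eqType} (x : T) (s : seq T) : x \in s -> In x s.
Proof. elim: s => //= a s IH; rewrite inE => /orP [/eqP ->|H]; [by left | right; exact: IH]. Qed.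

Lemma zword_rcons n (Z : {set 'I_n}) w i :
  all (fun x => x \in Z) w -> i \in Z -> all (fun x => x \in Z) (rcons w i).
Proof. by move=> Hw Hi; rewrite all_rcons Hi Hw. Qed.

Lemma play_zword_inv n (M : 'I_n -> 'I_n -> R) (Z : {set 'I_n}) (d : 'I_n -> R) q w :
  (forall i, i \in Z -> sumI (fun j => j \in Z) (fun j => M i j * d j) = 0) ->
  all (fun x => x \in Z) w ->
  sumI (fun j => j \in Z) (fun j => play M q w j * d j) = sumI (fun j => j \in Z) (fun j => q j * d j).
Proof.
move=> Hd; elim: w q => [|a w IH] q //= /andP [Ha Hw].
rewrite IH //. rewrite /fire.
rewrite (sumI_ext _ (g := fun j => q j * d j - q a * (M a j * d j))); last by move=> j; ring.
by rewrite sumI_sub sumI_scal Hd // Rmult_0_r Rminus_0_r.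
Qed.

Lemma fin_injective n (M : 'I_n -> 'I_n -> R) m (Z : {set 'I_n}) (d : 'I_n -> R) :
  Good M m -> FinZ m Z ->
  (forall i, i \in Z -> sumI (fun j => j \in Z) (fun j => M i j * d j) = 0) ->
  forall j, j \in Z -> d j = 0.
Proof.
move=> HG [S [HSZ HS]] Hd j0 Hj0.
have HG' := HG; move: HG' => [[Hdi _] _].
apply: NNPP => Hnz.
set D := sumI (fun j => j \in Z) (fun j => d j * d j).
have HD : 0 < D.
  rewrite /D /sumI (bigD1 j0) //=.
  have : (0 <= \sum_(i < n | (i \in Z) && (i != j0)) d i * d i)%R.
    apply: sumr_ge0 => i _. rewrite -RmultE. apply/RleP. exact: Rle_0_sqr.
  move/RleP => H. have : 0 < d j0 * d j0 by nra.
  move=> H1; exact: (Rplus_lt_le_0_compat _ _ H1 H).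
set l0 := fun j => d j / D.
have Hl0 : sumI (fun j => j \in Z) (fun j => l0 j * d j) = 1.
  rewrite /l0 (sumI_ext _ (g := fun j => / D * (d j * d j))); last by move=> j; rewrite /Rdiv; ring.
  rewrite sumI_scal -/D. field; lra.
set O := List.map (fun w => play M l0 w) S.
have [O' [HND HO]] := dedup_list O.
have HinO : forall x, In x O' -> exists w, all (fun x => x \in Z) w /\ x = play M l0 w.
  move=> x /HO /in_map_iff [w [<- Hw]]. exists w; split => //.
  by move/allP: HSZ => /(_ w (In_mem Hw)).
have Hclos : forall x i, In x O' -> i \in Z -> In (fire M i x) O'.
  move=> x i Hx Hi. have [w [Hw ->]] := HinO x Hx.
  rewrite -play_rcons. have [w' Hw' Cw'] := HS _ (zword_rcons Hw Hi).
  rewrite (play_cox HG Cw'). apply/HO. apply/in_map_iff. exists w'; split => //. exact: mem_In.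
have Hsum0 : forall i, i \in Z -> lsum (fun x => x i) O' = 0.
  move=> i Hi.
  have Hp : Permutation (List.map (fire M i) O') O'.
    apply: NoDup_Permutation.
    - apply: Injective_map_NoDup => // x y E.
      by rewrite -(fire_invol Hdi i x) E (fire_invol Hdi).
    - exact: HND.
    - move=> x; split.
      + move/in_map_iff => [y [<- Hy]]. exact: Hclos.
      + move=> Hx. apply/in_map_iff. exists (fire M i x); split; first exact: fire_invol.
        exact: Hclos.
  have := lsum_perm (fun x => x i) Hp. rewrite lsum_map.
  have E : lsum (fun a => fire M i a i) O' = lsum (fun x => - x i) O'.
    apply: lsum_ext => x _; rewrite /fire Hdi; ring.
  rewrite E lsum_opp. lra.
have Hl0O : In l0 O'.
  have [w' Hw' Cw'] := HS [::] isT. apply/HO. apply/in_map_iff. exists w'; split; last exact: mem_In.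
  by rewrite -(play_cox HG Cw').
have H1 : lsum (fun x => sumI (fun j => j \in Z) (fun j => x j * d j)) O' = INR (length O').
  apply: lsum_const1 => x Hx. have [w [Hw ->]] := HinO x Hx.
  by rewrite (play_zword_inv _ Hd Hw).
have H2 : lsum (fun x => sumI (fun j => j \in Z) (fun j => x j * d j)) O' = 0.
  rewrite (@lsum_sumI _ _ _ (fun x j => x j)).
  rewrite (sumI_extP (g := fun _ => 0)) ?sumI_zero //.
  move=> j Hj. rewrite Hsum0 //; ring.
have Hlen : (0 < length O')%coq_nat.
  move: Hl0O; case: (O') => [|a l] //= _; lia.
have := lt_0_INR _ Hlen. lra.
Qed.

Definition Amat n (M : 'I_n -> 'I_n -> R) (Z : {set 'I_n}) : 'M[R]_n :=
  \matrix_(a, b) (if (a \in Z) && (b \in Z) then M b a else if a == b then 1 else 0).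

Lemma Amat_in n M (Z : {set 'I_n}) (v : 'rV[R]_n) b : b \in Z ->
  (v *m Amat M Z)%R ord0 b = sumI (fun a => a \in Z) (fun a => M b a * v ord0 a).
Proof.
move=> Hb. rewrite mxE /sumI [RHS]big_mkcond /=. apply: eq_bigr => a _.
rewrite mxE Hb andbT. case Ha : (a \in Z) => /=; first by rewrite RmultE mulrC.
have -> : (a == b) = false by apply/negbTE; apply/negP => /eqP E; move: Ha; rewrite E Hb.
by rewrite mulr0.
Qed.

Lemma Amat_out n M (Z : {set 'I_n}) (v : 'rV[R]_n) b : b \notin Z ->
  (v *m Amat M Z)%R ord0 b = v ord0 b.
Proof.
move=> Hb. rewrite mxE (bigD1 b) //= big1 /=.
  by rewrite mxE (negbTE Hb) andbF eqxx mulr1 addr0.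
move=> a Hab. by rewrite mxE (negbTE Hb) andbF (negbTE Hab) mulr0.
Qed.

Lemma fin_solve n (M : 'I_n -> 'I_n -> R) m (Z : {set 'I_n}) :
  Good M m -> FinZ m Z ->
  exists x : 'I_n -> R, forall i, i \in Z -> sumI (fun j => j \in Z) (fun j => M i j * x j) = 1.
Proof.
move=> HG HF.
have Hdet : (\det (Amat M Z) != 0)%R.
  apply/negP => /det0P [v Hv0 HvA].
  have Hd : forall i, i \in Z -> sumI (fun j => j \in Z) (fun j => M i j * v ord0 j) = 0.
    move=> i Hi. rewrite -Amat_in // HvA. by rewrite mxE.
  have Hz := fin_injective HG HF Hd.
  move/negP: Hv0; apply. apply/eqP/rowP => a. rewrite !mxE.
  case Ha : (a \in Z); first by rewrite Hz.
  have := @Amat_out _ M Z v a (negbT Ha). by rewrite HvA mxE.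
have uA : Amat M Z \in unitmx by rewrite unitmxE unitfE.
pose e : 'rV[R]_n := (\row_b (if b \in Z then 1 else 0))%R.
exists (fun j => (e *m invmx (Amat M Z))%R ord0 j).
move=> i Hi. rewrite -(@Amat_in _ M Z _ i Hi) mulmxKV // mxE Hi. by [].
Qed.

Definition UZ n (M : 'I_n -> 'I_n -> R) (Z : {set 'I_n}) :=
  exists B, forall (p : Pos n) s, vlegal M Z p s -> (size s <= B)%N.

Fixpoint posl n (M : 'I_n -> 'I_n -> R) (p : Pos n) (s : seq 'I_n) : list (Pos n) :=
  match s with
  | [::] => [:: p]
  | i :: s' => p :: posl M (vfire M i p) s'
  end.

Lemma posl_length n M (p : Pos n) s : length (posl M p s) = (size s).+1.
Proof. elim: s p => //= i s IH p. by rewrite IH. Qed.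

Definition phi n (Z : {set 'I_n}) (x : 'I_n -> R) (p : Pos n) : Val :=
  fun k => sumI (fun j => j \in Z) (fun j => x j * p j k).

Lemma phi_fire n (M : 'I_n -> 'I_n -> R) (Z : {set 'I_n}) x p i :
  (forall i, i \in Z -> sumI (fun j => j \in Z) (fun j => M i j * x j) = 1) -> i \in Z ->
  phi Z x (vfire M i p) = (fun k => phi Z x p k - p i k).
Proof.
move=> Hx Hi; apply: functional_extensionality => k.
rewrite /phi /vfire.
rewrite (sumI_ext _ (g := fun j => x j * p j k - p i k * (M i j * x j))); last by move=> j; ring.
rewrite sumI_sub sumI_scal Hx //; ring.
Qed.

Lemma posl_below n (M : 'I_n -> 'I_n -> R) (Z : {set 'I_n}) x :
  (forall i, i \in Z -> sumI (fun j => j \in Z) (fun j => M i j * x j) = 1) ->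
  forall s p, vlegal M Z p s -> forall q, In q (posl M p s) ->
  q = p \/ lexpos (fun k => phi Z x p k - phi Z x q k).
Proof.
move=> Hx; elim=> [|i s IH] p /=.
  by move=> _ q [<-|[]]; left.
move=> [Hi [Hpi Hs]] q [<-|Hq]; first by left.
right. have Hphi := phi_fire p Hx Hi.
case: (IH _ Hs q Hq) => [->|H].
- rewrite Hphi. have -> : (fun k => phi Z x p k - (phi Z x p k - p i k)) = p i
    by apply: functional_extensionality => k; ring.
  by [].
- have := lexpos_add Hpi H. rewrite Hphi.
  have -> : (fun k => p i k + (phi Z x p k - p i k - phi Z x q k)) = (fun k => phi Z x p k - phi Z x q k)
    by apply: functional_extensionality => k; ring.
  by [].
Qed.

Lemma posl_nodup n (M : 'I_n -> 'I_n -> R) (Z : {set 'I_n}) x :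
  (forall i, i \in Z -> sumI (fun j => j \in Z) (fun j => M i j * x j) = 1) ->
  forall s p, vlegal M Z p s -> NoDup (posl M p s).
Proof.
move=> Hx; elim=> [|i s IH] p /=.
  move=> _; constructor; [by [] | constructor].
move=> [Hi [Hpi Hs]]. constructor; last exact: IH.
move=> Hin. have Hphi := phi_fire p Hx Hi.
case: (posl_below Hx Hs Hin) => [E|H].
- rewrite -E in Hphi. have [k [Hk _]] := Hpi.
  have := f_equal (fun f => f k) Hphi. rewrite /=. lra.
- rewrite Hphi in H.
  have : lexpos (fun k => - p i k).
    have -> : (fun k => - p i k) = (fun k => phi Z x p k - p i k - phi Z x p k)
      by apply: functional_extensionality => k; ring.
    by [].
  exact: lexpos_antisym Hpi.
Qed.

Lemma posl_orbit n (M : 'I_n -> 'I_n -> R) (Z : {set 'I_n}) :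
  forall s p, vlegal M Z p s -> forall q, In q (posl M p s) ->
  exists w, all (fun x => x \in Z) w /\ q = vplay M p w.
Proof.
elim=> [|i s IH] p /=.
  by move=> _ q [<-|[]]; exists [::].
move=> [Hi [Hpi Hs]] q [<-|Hq]; first by exists [::].
have [w [Hw ->]] := IH _ Hs q Hq. by exists (i :: w); rewrite /= Hi Hw.
Qed.

Lemma fin_U n (M : 'I_n -> 'I_n -> R) m (Z : {set 'I_n}) :
  Good M m -> FinZ m Z -> UZ M Z.
Proof.
move=> HG HF.
have [x Hx] := fin_solve HG HF.
move: HF => [S [HSZ HS]].
exists (size S) => p s Hs.
have H1 := posl_nodup Hx Hs.
have H2 : incl (posl M p s) (List.map (vplay M p) S).
  move=> q Hq. have [w [Hw ->]] := posl_orbit Hs Hq.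
  have [w' Hw' Cw] := HS w Hw. rewrite (vplay_cox p HG Cw).
  apply/in_map_iff; exists w'; split => //. exact: mem_In.
have := NoDup_incl_length H1 H2. rewrite posl_length length_map.
move=> H. have : ((size s).+1 <= size S)%coq_nat by exact: H.
lia.
Qed.

Definition embR n (p : Pos n) : Pos n := fun j k => if k == 0%N then p j 0%N else 0.

Lemma lexpos_ge0 (v : Val) : lexpos v -> 0 <= v 0%N.
Proof. move=> [k [Hk H0]]. case: k Hk H0 => [|k] Hk H0; first lra. rewrite H0 //; lra. Qed.

Lemma lexpos_real (v : Val) : (forall k, k != 0%N -> v k = 0) -> (lexpos v <-> 0 < v 0%N).
Proof.
move=> H; split.
- move=> [k [Hk H0]]. case: k Hk H0 => [|k] Hk H0 //. by rewrite H in Hk; [lra|].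
- move=> H0; exists 0%N; split => // k'; by [].
Qed.

Lemma embR_fire n (M : 'I_n -> 'I_n -> R) (p : Pos n) i :
  embR (vfire M i p) = vfire M i (embR p).
Proof.
apply: functional_extensionality => j; apply: functional_extensionality => k.
rewrite /embR /vfire; case: (k == 0%N) => //; ring.
Qed.

Lemma embR_play n (M : 'I_n -> 'I_n -> R) (p : Pos n) s :
  embR (vplay M p s) = vplay M (embR p) s.
Proof. elim: s p => //= i s IH p. by rewrite IH embR_fire. Qed.

Lemma embR_real n (p : Pos n) j : forall k, k != 0%N -> embR p j k = 0.
Proof. move=> k Hk; by rewrite /embR (negbTE Hk). Qed.

Lemma embR_zero_move n (M : 'I_n -> 'I_n -> R) (p : Pos n) i :
  p i 0%N = 0 -> embR (vfire M i p) = embR p.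
Proof.
move=> H. apply: functional_extensionality => j; apply: functional_extensionality => k.
rewrite /embR /vfire /=. case: (k == 0%N) => //. rewrite H; ring.
Qed.

Definition zs n (Z : {set 'I_n}) (p : Pos n) : {set 'I_n} := [set j in Z | p j 0%N == 0].

Lemma zs_embR n (Z : {set 'I_n}) (p q : Pos n) : embR p = embR q -> zs Z p = zs Z q.
Proof.
move=> E; apply/setP => j. rewrite !inE.
have := f_equal (fun f => f j 0%N) E. rewrite /embR /= => ->. by [].
Qed.

Lemma seg n (M : 'I_n -> 'I_n -> R) (Z : {set 'I_n}) :
  forall s (p : Pos n), vlegal M Z p s ->
  vlegal M (zs Z p) p s \/
  exists w i s', s = w ++ i :: s' /\ vlegal M (zs Z p) p w /\ embR (vplay M p w) = embR p /\
     0 < vplay M p w i 0%N /\ i \in Z /\ vlegal M Z (vfire M i (vplay M p w)) s'.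
Proof.
elim=> [|a s IH] p /=; first by left.
move=> [Ha [Hpa Hs]].
case: (Rlt_or_le 0 (p a 0%N)) => Hpos.
  right; exists [::], a, s; split => //.
have Hz : p a 0%N = 0 by have := lexpos_ge0 Hpa; lra.
have Ee := embR_zero_move M Hz.
have Ezs := zs_embR Z Ee.
case: (IH _ Hs) => [L|[w [i [s' [E [Lw [Ew [Hi [HiZ Ls']]]]]]]]].
- left; split; first by rewrite inE Ha Hz eqxx.
  split => //. by rewrite -Ezs.
- right; exists (a :: w), i, s'; split; first by rewrite E.
  split; first by split; [rewrite inE Ha Hz eqxx | split => //; rewrite -Ezs].
  split; first by rewrite /= Ew Ee.
  by split.
Qed.

Lemma zs_proper n (Z : {set 'I_n}) (p : Pos n) j :
  j \in Z -> p j 0%N <> 0 -> zs Z p \proper Z.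
Proof.
move=> Hj Hpj. rewrite properE; apply/andP; split.
- apply/subsetP => x; rewrite inE => /andP [] //.
- apply/negP => /subsetP /(_ j Hj). rewrite inE Hj /= => /eqP. by [].
Qed.

Lemma E_bound n (M : 'I_n -> 'I_n -> R) (Z : {set 'I_n}) B :
  (forall i, M i i = 2) ->
  (forall (Z' : {set 'I_n}), Z' \proper Z -> forall (p : Pos n) s, vlegal M Z' p s -> (size s <= B)%N) ->
  forall N (p : Pos n), (exists2 j, j \in Z & p j 0%N <> 0) -> vbounded M Z (embR p) N ->
  forall s, vlegal M Z p s -> (size s <= N.+1 * B.+1)%N.
Proof.
move=> Hd HU; elim=> [|N IH] p [j Hj Hpj] Hb s Hs;
  (case: (seg Hs) => [L|[w [i [s' [E [Lw [Ew [Hi [HiZ Ls']]]]]]]]];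
   [have := HU _ (zs_proper Hj Hpj) _ _ L; lia | ]).
- have L1 : vlegal M Z (embR p) [:: i].
    split => //; split => //. rewrite -Ew. apply/lexpos_real; first exact: embR_real. by [].
  have := Hb _ L1. by [].
- have Hw := HU _ (zs_proper Hj Hpj) _ _ Lw.
  set p1 := vplay M p w in Ew Hi Ls'.
  set p2 := vfire M i p1 in Ls'.
  have Hb2 : vbounded M Z (embR p2) N.
    move=> t Ht. have L : vlegal M Z (embR p) (i :: t).
      split => //; split.
      - rewrite -Ew. apply/lexpos_real; first exact: embR_real. by [].
      - by rewrite -Ew -embR_fire.
    have := Hb _ L. by [].
  have Hnz : exists2 j, j \in Z & p2 j 0%N <> 0.
    apply: NNPP => Hno.
    have A : forall j, j \in Z -> p2 j 0%N = 0.
      move=> j' Hj'; apply: NNPP => H; apply: Hno; by exists j'.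
    have Ai : p1 i 0%N = 0.
      have := A i HiZ. rewrite /p2 /vfire Hd. lra.
    apply: Hpj. have := A j Hj. rewrite /p2 /vfire Ai.
    have := f_equal (fun f => f j 0%N) Ew. rewrite /embR /= => <-. lra.
  have := IH p2 Hnz Hb2 s' Ls'. rewrite E size_cat /= mulSn. lia.
Qed.

Definition isreal n (p : Pos n) := forall j k, k != 0%N -> p j k = 0.

Lemma isreal_fire n (M : 'I_n -> 'I_n -> R) p i : isreal p -> isreal (vfire M i p).
Proof. move=> H j k Hk; rewrite /vfire !H //; ring. Qed.

Lemma isreal_play n (M : 'I_n -> 'I_n -> R) p s : isreal p -> isreal (vplay M p s).
Proof. elim: s p => //= i s IH p H. apply: IH; exact: isreal_fire. Qed.

Lemma isreal_neg n (p : Pos n) : isreal p -> isreal (vneg p).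
Proof. move=> H j k Hk; rewrite /vneg H //; ring. Qed.

Lemma vlegal_zword n (M : 'I_n -> 'I_n -> R) (Z : {set 'I_n}) p s :
  vlegal M Z p s -> all (fun x => x \in Z) s.
Proof. elim: s p => //= i s IH p [Hi [_ Hs]]. by rewrite Hi (IH _ Hs). Qed.

Lemma vlegal_sub n (M : 'I_n -> 'I_n -> R) (Z Z' : {set 'I_n}) p s :
  Z \subset Z' -> vlegal M Z p s -> vlegal M Z' p s.
Proof.
move=> HZ; elim: s p => //= i s IH p [Hi [Hp Hs]]. split; first exact: (subsetP HZ).
split => //. exact: IH.
Qed.

Lemma bounded_fire n (M : 'I_n -> 'I_n -> R) m (Z : {set 'I_n}) p i :
  Good M m -> i \in Z -> (exists N, vbounded M Z p N) -> exists N, vbounded M Z (vfire M i p) N.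
Proof.
move=> HG Hi [N Hb].
have HG' := HG; move: HG' => [[Hd _] _].
case: (lex_trich (p i)) => [Hz|[Hpos|Hneg]].
- have -> : vfire M i p = p.
    apply: functional_extensionality => j; apply: functional_extensionality => k.
    rewrite /vfire Hz; ring.
  by exists N.
- exists (N - 1)%N. have := vbounded_play Hb (s := [:: i]) (conj Hi (conj Hpos I)). by [].
- have [t [Ht Htt]] := greedy Hb.
  have L : vlegal M Z (vfire M i p) (i :: t).
    split => //; split; last by rewrite (vfire_invol Hd).
    have -> : vfire M i p i = (fun k => - p i k)
      by apply: functional_extensionality => k; rewrite /vfire Hd; ring.
    by [].
  have T : vterminal Z (vplay M (vfire M i p) (i :: t)) by rewrite /= (vfire_invol Hd).
  exists (size (i :: t)). exact: SC_bound HG L T.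
Qed.

Lemma bounded_play n (M : 'I_n -> 'I_n -> R) m (Z : {set 'I_n}) p w :
  Good M m -> all (fun x => x \in Z) w -> (exists N, vbounded M Z p N) ->
  exists N, vbounded M Z (vplay M p w) N.
Proof.
move=> HG; elim: w p => //= i w IH p /andP [Hi Hw] Hb.
exact: (IH (vfire M i p) Hw (bounded_fire HG Hi Hb)).
Qed.

Lemma zinv n (M : 'I_n -> 'I_n -> R) (Hd : forall i, M i i = 2) (Z : {set 'I_n}) :
  forall t (p : Pos n), all (fun x => x \in Z) t ->
  (forall j, j \in Z -> vplay M p t j 0%N = 0) -> forall j, j \in Z -> p j 0%N = 0.
Proof.
elim=> [|a t IH] p //= /andP [Ha Ht] H.
have H1 := IH _ Ht H.
have Ha0 : p a 0%N = 0 by have := H1 a Ha; rewrite /vfire Hd; lra.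
move=> j Hj. have := H1 j Hj. rewrite /vfire Ha0. lra.
Qed.

Lemma connect_reach n (M : 'I_n -> 'I_n -> R) (Lam : Pos n) j0 c :
  egcm_connected M -> Lam j0 0%N <> 0 ->
  exists w, vplay M Lam w c 0%N <> 0.
Proof.
move=> Hc Hj0.
have := Hc j0 c. move/connectP => [pth Hpth ->] {c}.
have H0 : exists w, vplay M Lam w j0 0%N <> 0 by exists [::].
elim: pth j0 H0 {Hj0} Hpth => [|b pth IH] a [w Ha] /=.
  move=> _; by exists w.
move=> /andP [Hab Hpth]. apply: (IH b) => //.
have Mab : M a b <> 0.
  move: Hab => /andP [_]. by case: Req_dec_T.
case: (Req_dec (vplay M Lam w b 0%N) 0) => Hb; last by exists w.
exists (rcons w a). rewrite /vplay foldl_rcons -/(vplay M Lam w) /vfire Hb.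
move=> E. have : M a b * vplay M Lam w a 0%N = 0 by lra.
move/Rmult_integral => [] //.
Qed.

Lemma all_setT n (w : seq 'I_n) : all (fun x => x \in [set: 'I_n]) w.
Proof. by apply/allP => x _; rewrite inE. Qed.

Lemma bounded_sub n (M : 'I_n -> 'I_n -> R) (Z Z' : {set 'I_n}) p N :
  Z \subset Z' -> vbounded M Z' p N -> vbounded M Z p N.
Proof. move=> HZ Hb s Hs; apply: Hb; exact: vlegal_sub HZ Hs. Qed.

Lemma F6 n (M : 'I_n -> 'I_n -> R) m (Lam : Pos n) (Z : {set 'I_n}) c :
  Good M m -> egcm_connected M -> isreal Lam -> (forall j, 0 <= Lam j 0%N) ->
  (exists j, Lam j 0%N <> 0) -> (exists N, vbounded M [set: 'I_n] Lam N) -> c \in Z ->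
  exists r : Pos n, isreal r /\ (forall j, j \in Z -> 0 <= r j 0%N) /\
    (exists2 j, j \in Z & r j 0%N <> 0) /\ exists N, vbounded M Z r N.
Proof.
move=> HG Hc HLr HL0 [j0 Hj0] [N0 Hb0] HcZ.
have HG' := HG; move: HG' => [[Hd _] _].
set T := [set: 'I_n].
have [t [Lt Tt]] := greedy Hb0.
set mu := vplay M Lam t in Tt.
have [Lr Er] := vlegal_rev Hd Lt. rewrite -/mu in Lr Er.
have Tn : vterminal T (vplay M (vneg mu) (rev t)).
  rewrite Er => j _ H. have := (proj1 (lexpos_real (isreal_neg HLr j))) H.
  rewrite /vneg. have := HL0 j. lra.
have Bmu : exists N, vbounded M T (vneg mu) N by eexists; exact: SC_bound HG Lr Tn.
have [w Hw] := @connect_reach _ M Lam j0 c Hc Hj0.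
set p := vplay M Lam w in Hw.
have [Np Bp] : exists N, vbounded M T p N by exact: (bounded_play HG (all_setT w) (ex_intro _ N0 Hb0)).
have BpZ : vbounded M Z p Np by apply: bounded_sub Bp; exact: subsetT.
have [t' [Lt' Tt']] := greedy BpZ.
set q := vplay M p t' in Tt'.
have Hqr : isreal q by apply: isreal_play; apply: isreal_play.
have Hnz : exists2 j, j \in Z & q j 0%N <> 0.
  apply: NNPP => Hno. apply: Hw.
  apply: (zinv Hd (vlegal_zword Lt')) => // j Hj.
  apply: NNPP => H; apply: Hno; by exists j.
exists (vneg q); split; first exact: isreal_neg.
split.
  move=> j Hj. have := Tt' j Hj. rewrite (lexpos_real (Hqr j)) /vneg => H.
  have : ~ (0 < q j 0%N) by []. lra.
split.
  have [j Hj Hqj] := Hnz. exists j => //. rewrite /vneg. lra.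
have -> : vneg q = vplay M (vneg mu) (rev t ++ w ++ t').
  rewrite !vplay_cat Er vplay_neg vplay_neg. by [].
have [N1 B1] : exists N, vbounded M T (vplay M (vneg mu) (rev t ++ w ++ t')) N.
  exact: (bounded_play HG (all_setT _) Bmu).
exists N1. apply: bounded_sub B1; exact: subsetT.
Qed.

Lemma fin_step n (M : 'I_n -> 'I_n -> R) m (Z : {set 'I_n}) (r : Pos n) N B :
  Good M m -> isreal r -> (forall j, j \in Z -> 0 <= r j 0%N) -> (exists2 j, j \in Z & r j 0%N <> 0) ->
  vbounded M Z r N ->
  (forall (Z' : {set 'I_n}), Z' \proper Z -> forall (p : Pos n) s, vlegal M Z' p s -> (size s <= B)%N) ->
  FinZ m Z.
Proof.
move=> HG Hr Hr0 Hnz Hb HU.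
have HG' := HG; move: HG' => [[Hd _] _].
pose rho : Pos n := fun j k => if k == 0%N then r j 0%N else if k == (j : nat).+1 then 1 else 0.
have Hemb : embR rho = r.
  apply: functional_extensionality => j; apply: functional_extensionality => k.
  rewrite /embR /rho. case: eqP => [->|/eqP Hk] //. by rewrite Hr.
have Hnz' : exists2 j, j \in Z & rho j 0%N <> 0 by case: Hnz => j Hj H; exists j.
have Hb' : vbounded M Z (embR rho) N by rewrite Hemb.
have Hbr := E_bound Hd HU Hnz' Hb'.
apply: (fin_from_bound HG _ _ Hbr).
- move=> j Hj. case: (Rlt_or_le 0 (r j 0%N)) => H.
  + exists 0%N; split => //. 
  + have Hz : r j 0%N = 0 by have := Hr0 j Hj; lra.
    exists (j : nat).+1; split; first by rewrite /rho /= eqxx; lra.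
    move=> k' Hk'. rewrite /rho.
    have -> : (k' == (j : nat).+1) = false by apply/negbTE; rewrite neq_ltn Hk'.
    case: (k' == 0%N) => //.
- move=> j k. rewrite /rho /=. by rewrite eqSS eq_sym.
Qed.

Lemma uniform_bound (T : finType) (Q : T -> Prop) (P : T -> nat -> Prop) :
  (forall x B B', (B <= B')%N -> P x B -> P x B') -> (forall x, Q x -> exists B, P x B) ->
  exists B, forall x, Q x -> P x B.
Proof.
move=> Hmon HQ.
suff H : forall l : seq T, exists B, forall x, x \in l -> Q x -> P x B.
  have [B HB] := H (enum T). exists B => x; apply: HB; by rewrite mem_enum.
elim=> [|a l [B1 HB1]]; first by exists 0%N.
case: (classic (Q a)) => Ha.
- have [B2 HB2] := HQ a Ha. exists (maxn B1 B2) => x; rewrite inE => /orP [/eqP ->|Hx] Hq.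
  + apply: Hmon HB2; exact: leq_maxr.
  + apply: Hmon (HB1 x Hx Hq); exact: leq_maxl.
- exists B1 => x; rewrite inE => /orP [/eqP ->|Hx] Hq //. exact: HB1.
Qed.

Lemma all_Z n (M : 'I_n -> 'I_n -> R) m (Lam : Pos n) :
  Good M m -> egcm_connected M -> isreal Lam -> (forall j, 0 <= Lam j 0%N) ->
  (exists j, Lam j 0%N <> 0) -> (exists N, vbounded M [set: 'I_n] Lam N) ->
  forall c (Z : {set 'I_n}), (#|Z| <= c)%N -> FinZ m Z /\ UZ M Z.
Proof.
move=> HG Hc HLr HL0 HLnz HLb.
have Hempty : forall Z : {set 'I_n}, Z = set0 -> FinZ m Z /\ UZ M Z.
  move=> Z ->; split.
  - exists [:: [::]]; split => //. move=> [|x w] /=; first by exists [::]; [rewrite inE | exact: cox_refl].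
    by rewrite inE.
  - exists 0%N => p [|i s] //= [Hi _]. by rewrite inE in Hi.
elim=> [|c IH] Z HZ.
- apply: Hempty. apply/eqP; rewrite -cards_eq0. lia.
- case: (set_0Vmem Z) => [HZ0|[c0 Hc0]]; first exact: Hempty.
  have [r [Hr [Hr0 [Hrnz [N HbN]]]]] := F6 HG Hc HLr HL0 HLnz HLb Hc0.
  have [B HB] := @uniform_bound {set 'I_n} (fun Z' => Z' \proper Z)
     (fun Z' B => forall (p : Pos n) s, vlegal M Z' p s -> (size s <= B)%N)
     ltac:(move=> x B B' HBB' H p s Hs; exact: leq_trans (H p s Hs) HBB')
     ltac:(move=> Z' HZ'; apply: (proj2 (IH Z' _)); have := proper_card HZ'; lia).
  have HF := fin_step HG Hr Hr0 Hrnz HbN HB.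
  split => //. exact: fin_U HG HF.
Qed.

Definition emb n (l : 'I_n -> R) : Pos n := fun j k => if k == 0%N then l j else 0.

Lemma emb_real n (l : 'I_n -> R) : isreal (emb l).
Proof. move=> j k Hk; by rewrite /emb (negbTE Hk). Qed.

Lemma emb_fire n (M : 'I_n -> 'I_n -> R) l i : vfire M i (emb l) = emb (fire M i l).
Proof.
apply: functional_extensionality => j; apply: functional_extensionality => k.
rewrite /emb /vfire /fire; case: (k == 0%N) => //; ring.
Qed.

Lemma emb_play n (M : 'I_n -> 'I_n -> R) l s : vplay M (emb l) s = emb (play M l s).
Proof. elim: s l => //= i s IH l. by rewrite emb_fire IH. Qed.

Lemma emb_lexpos n (l : 'I_n -> R) j : lexpos (emb l j) <-> 0 < l j.
Proof. rewrite (lexpos_real (emb_real l j)). by rewrite /emb. Qed.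

Lemma legal_emb n (M : 'I_n -> 'I_n -> R) l s :
  legal_play M l s <-> vlegal M [set: 'I_n] (emb l) s.
Proof.
elim: s l => [|i s IH] l //=.
rewrite emb_fire -IH emb_lexpos inE. split; [by move=> [A B] | by move=> [_ [A B]]].
Qed.

Lemma terminal_emb n (l : 'I_n -> R) :
  vterminal [set: 'I_n] (emb l) <-> forall j, l j <= 0.
Proof.
split.
- move=> H j. have := H j (in_setT j). rewrite emb_lexpos. lra.
- move=> H j _. rewrite emb_lexpos. have := H j. lra.
Qed.

Lemma adm_fin n (M : 'I_n -> 'I_n -> R) m :
  Good M m -> admissible M -> coxeter_finite m.
Proof.
move=> HG [Hc [l [Hl0 [[j0 Hj0] [s [Ls Ts]]]]]].
have Ls' := proj1 (legal_emb M l s) Ls.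
have Ts' : vterminal [set: 'I_n] (vplay M (emb l) s) by rewrite emb_play; apply/terminal_emb.
have Hb := SC_bound HG Ls' Ts'.
have [HF _] := all_Z HG Hc (emb_real l) (fun j => Hl0 j) (ex_intro _ j0 Hj0)
                 (ex_intro _ _ Hb) (leqnn #|[set: 'I_n]|).
move: HF => [S [_ HS]]. exists S => w. have [w' Hw' Cw] := HS w (all_setT w). by exists w'.
Qed.

Lemma fin_adm n (M : 'I_n -> 'I_n -> R) m :
  (0 < n)%N -> Good M m -> egcm_connected M -> coxeter_finite m -> admissible M.
Proof.
move=> Hn HG Hc [S HS].
have HF : FinZ m [set: 'I_n].
  exists S; split; first by apply/allP => w _; exact: all_setT.
  move=> w _. have [w' Hw' Cw] := HS w. by exists w'.
have [B HB] := fin_U HG HF.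
pose i0 : 'I_n := Ordinal Hn.
pose l : 'I_n -> R := fun j => if j == i0 then 1 else 0.
have Hb : vbounded M [set: 'I_n] (emb l) B by move=> s Hs; exact: HB Hs.
have [t [Lt Tt]] := greedy Hb.
split => //. exists l; split; first by move=> j; rewrite /l; case: (j == i0); lra.
split; first by exists i0; rewrite /l eqxx; lra.
exists t; split; first by apply/legal_emb.
apply/terminal_emb. by rewrite -emb_play.
Qed.

Lemma irr_conn n (M : 'I_n -> 'I_n -> R) m :
  Good M m -> coxeter_irreducible m -> egcm_connected M.
Proof.
move=> HG Hirr i j.
have HG' := HG; move: HG' => [[Hd [Ho [Hz Hp]]] [Hcm Ha]].
apply: (connect_sub _ (Hirr i j)) => a b /andP [Hab Hm].
apply: connect1. rewrite Hab /=.
case: Req_dec_T => // E. exfalso.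
have := Ha a b Hab. move: Hm. case Em : (m a b) => [k|] Hk H.
- have [N1 _] := Good_offneg HG Hab Em Hk. lra.
- rewrite E in H. lra.
Qed.

Lemma exists_M n (m : 'I_n -> 'I_n -> option nat) :
  coxeter_matrix m -> exists M : 'I_n -> 'I_n -> R, EGCM M /\ assoc_coxeter M m.
Proof.
move=> Hcm.
pose M : 'I_n -> 'I_n -> R := fun i j => if i == j then 2 else
   match m i j with None => -2 | Some k => - 2 * cos (PI / INR k) end.
have Hcos : forall k, (2 <= k)%N -> 0 <= cos (PI / INR k).
  move=> k Hk. have Hk' : 2 <= INR k by have := INR_leq Hk; rewrite /=; lra.
  have HP := PI_RGT_0.
  apply: cos_ge_0.
  - have : 0 < PI / INR k by apply: Rdiv_lt_0_compat; lra. lra.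
  - apply: (Rmult_le_reg_r (2 * INR k)); first lra. field_simplify; try lra. nra.
have Hsym : forall i j, M i j = M j i.
  move=> i j. rewrite /M. case: (eqVneq i j) => [E|Hij]; first by subst.
  have Hji : (j == i) = false by apply/negbTE; rewrite eq_sym.
  by have [-> _] := Hcm i j Hij.
exists M; split; last first.
  move=> i j Hij. rewrite -(Hsym i j) /M (negbTE Hij). case: (m i j) => [k|]; [ring | lra].
split; first by move=> i; rewrite /M eqxx.
split.
  move=> i j Hij. rewrite /M (negbTE Hij). case Em : (m i j) => [k|]; last lra.
  have [_ H2] := Hcm i j Hij. have := Hcos k (H2 k Em). lra.
split.
  move=> i j. rewrite Hsym. tauto.
move=> i j Hij Hnz. rewrite /M (negbTE Hij) in Hnz *.
have [E1 H2] := Hcm i j Hij. have Hji : (j == i) = false by apply/negbTE; rewrite eq_sym.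
rewrite Hji -E1. case Em : (m i j) => [k|]; last by left; lra.
right. exists k; split; last by ring.
have Hk2 := H2 k Em. case: (ltnP 2 k) => // Hk. have Ek : k = 2%N by lia.
subst k. exfalso. apply: Hnz. rewrite Em cos_PI_INR2. ring.
Qed.

Theorem corollary4p1 (n : nat) (m : 'I_n -> 'I_n -> option nat) :
  (0 < n)%N -> coxeter_matrix m -> coxeter_irreducible m ->
  (coxeter_finite m <->
     exists M : 'I_n -> 'I_n -> R, EGCM M /\ assoc_coxeter M m /\ admissible M) /\
  (coxeter_finite m <->
     forall M : 'I_n -> 'I_n -> R, EGCM M -> assoc_coxeter M m -> admissible M).
Proof.
move=> Hn Hcm Hirr.
have Hall : coxeter_finite m -> forall M, EGCM M -> assoc_coxeter M m -> admissible M.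
  move=> Hf M HM Ha. have HG : Good M m by split => //; split.
  exact: fin_adm Hn HG (irr_conn HG Hirr) Hf.
have Hex : (exists M, EGCM M /\ assoc_coxeter M m /\ admissible M) -> coxeter_finite m.
  move=> [M [HM [Ha Hadm]]]. have HG : Good M m by split => //; split.
  exact: adm_fin HG Hadm.
split; split.
- move=> Hf. have [M [HM Ha]] := exists_M Hcm. exists M; split => //; split => //. exact: Hall.
- exact: Hex.
- exact: Hall.
- move=> H. have [M [HM Ha]] := exists_M Hcm. apply: Hex. exists M; split => //; split => //.
  exact: H.
Qed.
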